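(* Suppose that the natural action of $G$ on $\mathcal M(S_G(M))$ makes it a definable $G$-flow, and that $G$ is definably strongly amenable. Then $G$ is definably amenable.
   Context: $M$ is a first-order structure, $G$ a group definable in $M$, and all types in $S_G(M)$ are definable (for each $p$ and formula $\varphi(x,y)$, $\{m:\varphi(x,m)\in p\}$ is definable). $\mathcal M(S_G(M))$ is the space of Keisler measures (finitely additive probability measures on the Boolean algebra $B_G(M)$ of $M$-definable subsets of $G$), a closed subset of $[0,1]^{B_G(M)}$ with the product topology, with $G$ acting by $(g\mu)(X)=\mu(g^{-1}X)$. A map $f:G\to C$ to a compact Hausdorff space is definable if for any disjoint closed $C_1,C_2$ the preimages are separated by a definable subset of $G$. A $G$-flow (action by homeomorphisms on a compact Hausdorff space) is definable if each orbit map $g\mapsto gx$ is definable; minimal if no proper nonempty closed invariant subset; proximal if for all $x,y$ there is a net $(g_i)$ with $\lim g_ix=\lim g_iy$. $G$ is definably strongly amenable if every minimal definable proximal $G$-flow is a single point, and definably amenable if there is a $G$-invariant Keisler measure on $G$ over $M$. *)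

(* Defs.v *)
From Stdlib Require Import Reals List.
Import ListNotations.
Set Implicit Arguments.
Unset Strict Implicit.

(* First-order structures.  Symbols are interpreted on finite lists; a *)
(* symbol applied to a list of length n acts as an n-ary symbol (i.e.  *)
(* each symbol is a family of symbols, one for each arity).            *)
Record structure := {
  carrier :> Type;
  fsym : Type;
  rsym : Type;
  fint : fsym -> list carrier -> carrier;
  rint : rsym -> list carrier -> Prop }.

Inductive term (F : Type) : Type :=
| tvar : nat -> term F
| tapp : F -> list (term F) -> term F.
Arguments tvar {F} _.
Arguments tapp {F} _ _.

Inductive formula (F R : Type) : Type :=
| fatom : R -> list (term F) -> formula F R
| feq : term F -> term F -> formula F R
| fneg : formula F R -> formula F R
| fand : formula F R -> formula F R -> formula F R
| fex : nat -> formula F R -> formula F R.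
Arguments fatom {F R} _ _.
Arguments feq {F R} _ _.
Arguments fneg {F R} _.
Arguments fand {F R} _ _.
Arguments fex {F R} _ _.

Fixpoint teval (M : structure) (e : nat -> M) (t : term (fsym M)) : carrier M :=
  match t with
  | tvar i => e i
  | tapp f ts => fint f (map (teval e) ts)
  end.

Definition upd (M : structure) (e : nat -> M) (i : nat) (a : M) : nat -> M :=
  fun j => if Nat.eqb j i then a else e j.

Fixpoint sat (M : structure) (e : nat -> M) (phi : formula (fsym M) (rsym M)) : Prop :=
  match phi with
  | fatom r ts => rint r (map (teval e) ts)
  | feq t1 t2 => teval e t1 = teval e t2
  | fneg p => ~ sat e p
  | fand p q => sat e p /\ sat e q
  | fex i p => exists a : M, sat (upd e i a) p
  end.

(* variables 0..length l - 1 are assigned l, the others take parameters from e *)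
Definition env_app (M : structure) (l : list M) (e : nat -> M) : nat -> M :=
  fun i => match nth_error l i with Some a => a | None => e i end.

Definition definable (M : structure) (n : nat) (P : list M -> Prop) : Prop :=
  exists (phi : formula (fsym M) (rsym M)) (e : nat -> M),
    forall l : list M, length l = n -> (P l <-> sat (env_app l e) phi).

Definition def_group (M : structure) (k : nat) (G : list M -> Prop)
  (mul : list M -> list M -> list M) (inv : list M -> list M) (one : list M) : Prop :=
  (forall g, G g -> length g = k) /\
  definable k G /\
  definable (k + k + k)
    (fun l => G (firstn k l) /\ G (firstn k (skipn k l)) /\
              skipn (k + k) l = mul (firstn k l) (firstn k (skipn k l))) /\
  G one /\
  (forall g h, G g -> G h -> G (mul g h)) /\
  (forall g, G g -> G (inv g)) /\
  (forall g h l, G g -> G h -> G l -> mul (mul g h) l = mul g (mul h l)) /\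
  (forall g, G g -> mul one g = g /\ mul g one = g) /\
  (forall g, G g -> mul (inv g) g = one /\ mul g (inv g) = one).

Definition inB (M : structure) (k : nat) (G : list M -> Prop) (X : list M -> Prop) : Prop :=
  definable k X /\ (forall g, X g -> G g).

(* complete types over M concentrating on G: ultrafilters of B_G(M),
   i.e. Boolean algebra homomorphisms B_G(M) -> 2 (values off B_G(M) irrelevant) *)
Definition is_type (M : structure) (k : nat) (G : list M -> Prop)
  (p : (list M -> Prop) -> Prop) : Prop :=
  p G /\
  (forall X Y, inB k G X -> inB k G Y -> (p (fun g => X g /\ Y g) <-> p X /\ p Y)) /\
  (forall X, inB k G X -> (p (fun g => G g /\ ~ X g) <-> ~ p X)).

Definition definable_type (M : structure) (k : nat) (G : list M -> Prop)
  (p : (list M -> Prop) -> Prop) : Prop :=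
  forall (m : nat) (D : list M -> Prop), definable (k + m) D ->
    definable m (fun b => p (fun a => G a /\ D (a ++ b))).

(* Keisler measures: finitely additive probability measures on B_G(M)
   (values off B_G(M) irrelevant) *)
Definition keisler (M : structure) (k : nat) (G : list M -> Prop)
  (mu : (list M -> Prop) -> R) : Prop :=
  (forall X, inB k G X -> (0 <= mu X <= 1)%R) /\
  mu G = 1%R /\
  (forall X Y, inB k G X -> inB k G Y -> (forall g, X g -> Y g -> False) ->
     mu (fun g => X g \/ Y g) = (mu X + mu Y)%R).

(* (g mu)(X) = mu(g^{-1} X) *)
Definition mtrans (M : structure) (G : list M -> Prop) (mul : list M -> list M -> list M)
  (g : list M) (mu : (list M -> Prop) -> R) : (list M -> Prop) -> R :=
  fun X => mu (fun h => G h /\ X (mul g h)).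

(* open sets of the product topology of R^{B_G(M)} (coordinates indexed by B_G(M)) *)
Definition prod_open (M : structure) (k : nat) (G : list M -> Prop)
  (U : ((list M -> Prop) -> R) -> Prop) : Prop :=
  forall mu, U mu -> exists (Xs : list (list M -> Prop)) (eps : R),
    (0 < eps)%R /\ (forall X, In X Xs -> inB k G X) /\
    forall nu, (forall X, In X Xs -> (Rabs (nu X - mu X) < eps)%R) -> U nu.

Definition prod_closed (M : structure) (k : nat) (G : list M -> Prop)
  (C : ((list M -> Prop) -> R) -> Prop) : Prop :=
  prod_open k G (fun mu => ~ C mu).

(* Closed subsets of the
   subspace of Keisler measures are traces of closed subsets of the product. *)
Definition measure_flow_definable (M : structure) (k : nat) (G : list M -> Prop)
  (mul : list M -> list M -> list M) : Prop :=
  forall mu, keisler k G mu ->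
  forall C1 C2, prod_closed k G C1 -> prod_closed k G C2 ->
    (forall nu, keisler k G nu -> C1 nu -> C2 nu -> False) ->
    exists D, definable k D /\
      forall g, G g ->
        (C1 (mtrans G mul g mu) -> D g) /\ (C2 (mtrans G mul g mu) -> ~ D g).

Record topology (X : Type) := {
  is_open : (X -> Prop) -> Prop;
  open_full : is_open (fun _ => True);
  open_inter : forall U V, is_open U -> is_open V -> is_open (fun x => U x /\ V x);
  open_union : forall F : (X -> Prop) -> Prop, (forall U, F U -> is_open U) ->
      is_open (fun x => exists U, F U /\ U x) }.

Definition is_closed (X : Type) (T : topology X) (C : X -> Prop) : Prop :=
  is_open T (fun x => ~ C x).

Definition compact (X : Type) (T : topology X) : Prop :=
  forall F : (X -> Prop) -> Prop, (forall U, F U -> is_open T U) ->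
    (forall x, exists U, F U /\ U x) ->
    exists Us : list (X -> Prop), (forall U, In U Us -> F U) /\
      (forall x, exists U, In U Us /\ U x).

Definition hausdorff (X : Type) (T : topology X) : Prop :=
  forall x y : X, x <> y -> exists U V, is_open T U /\ is_open T V /\ U x /\ V y /\
    (forall z, U z -> V z -> False).

Definition continuous (X : Type) (T : topology X) (f : X -> X) : Prop :=
  forall U, is_open T U -> is_open T (fun x => U (f x)).

Definition directed (I : Type) (le : I -> I -> Prop) : Prop :=
  (exists i : I, True) /\ (forall i, le i i) /\
  (forall i j l, le i j -> le j l -> le i l) /\
  (forall i j, exists l, le i l /\ le j l).

Definition net_converges (X : Type) (T : topology X) (I : Type) (le : I -> I -> Prop)
  (x : I -> X) (z : X) : Prop :=
  forall U, is_open T U -> U z -> exists i0, forall i, le i0 i -> U (x i).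

Definition is_flow (M : structure) (G : list M -> Prop) (mul : list M -> list M -> list M)
  (one : list M) (X : Type) (T : topology X) (act : list M -> X -> X) : Prop :=
  (exists x : X, True) /\ compact T /\ hausdorff T /\
  (forall g, G g -> continuous T (act g)) /\
  (forall x, act one x = x) /\
  (forall g h x, G g -> G h -> act (mul g h) x = act g (act h x)).

Definition definable_map (M : structure) (k : nat) (G : list M -> Prop)
  (X : Type) (T : topology X) (f : list M -> X) : Prop :=
  forall C1 C2, is_closed T C1 -> is_closed T C2 -> (forall x, C1 x -> C2 x -> False) ->
    exists D, definable k D /\
      forall g, G g -> (C1 (f g) -> D g) /\ (C2 (f g) -> ~ D g).

Definition definable_flow (M : structure) (k : nat) (G : list M -> Prop)
  (X : Type) (T : topology X) (act : list M -> X -> X) : Prop :=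
  forall x : X, definable_map k G T (fun g => act g x).

Definition minimal_flow (M : structure) (G : list M -> Prop)
  (X : Type) (T : topology X) (act : list M -> X -> X) : Prop :=
  forall Y : X -> Prop, is_closed T Y -> (exists y, Y y) ->
    (forall g y, G g -> Y y -> Y (act g y)) -> forall x, Y x.

Definition proximal_flow (M : structure) (G : list M -> Prop)
  (X : Type) (T : topology X) (act : list M -> X -> X) : Prop :=
  forall x y : X, exists (I : Type) (le : I -> I -> Prop) (gs : I -> list M) (z : X),
    directed le /\ (forall i, G (gs i)) /\
    net_converges T le (fun i => act (gs i) x) z /\
    net_converges T le (fun i => act (gs i) y) z.

Definition def_strongly_amenable (M : structure) (k : nat) (G : list M -> Prop)
  (mul : list M -> list M -> list M) (one : list M) : Prop :=
  forall (X : Type) (T : topology X) (act : list M -> X -> X),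
    is_flow G mul one T act -> definable_flow k G T act ->
    minimal_flow G T act -> proximal_flow G T act ->
    forall x y : X, x = y.

Definition def_amenable (M : structure) (k : nat) (G : list M -> Prop)
  (mul : list M -> list M -> list M) : Prop :=
  exists mu, keisler k G mu /\
    forall g X, G g -> inB k G X -> mtrans G mul g mu X = mu X.

(* Main.v *)
Require Import Defs.
From Stdlib Require Import Reals List.
From Stdlib Require Import Lra Lia Classical ClassicalEpsilon FunctionalExtensionality PropExtensionality ProofIrrelevance ZArith.
From mathcomp Require classical_sets.
Import ListNotations.
Notation "f =1 g" := (forall x, f x = g x) (at level 70).

Section Syn.
Variable M : structure.
Notation F := (fsym M).
Notation Rs := (rsym M).

Fixpoint term_ind2 (P : term F -> Prop) (Hv : forall i, P (tvar i))
  (Ha : forall f ts, Forall P ts -> P (tapp f ts)) (t : term F) : P t :=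
  match t with
  | tvar i => Hv i
  | tapp f ts => Ha f ts ((fix go (l : list (term F)) : Forall P l :=
       match l with nil => Forall_nil P | cons x l' => Forall_cons x (term_ind2 P Hv Ha x) (go l') end) ts)
  end.

Lemma teval_ext (e1 e2 : nat -> M) t : (forall i, e1 i = e2 i) -> teval e1 t = teval e2 t.
Proof.
  intro h. induction t using term_ind2; simpl; auto.
  f_equal. induction H; simpl; auto. f_equal; auto.
Qed.

Lemma sat_ext (phi : formula F Rs) : forall (e1 e2 : nat -> M), (forall i, e1 i = e2 i) -> (sat e1 phi <-> sat e2 phi).
Proof.
  induction phi; intros e1 e2 h; simpl.
  - replace (map (teval e1) l) with (map (teval e2) l); [tauto|].
    apply map_ext; intro; symmetry; apply teval_ext; auto.
  - rewrite (teval_ext e1 e2 t), (teval_ext e1 e2 t0); auto. tauto.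
  - rewrite (IHphi e1 e2 h); tauto.
  - rewrite (IHphi1 e1 e2 h), (IHphi2 e1 e2 h); tauto.
  - split; intros [a ha]; exists a.
    + apply (IHphi (upd e1 n a)); auto. intro i; unfold upd; destruct (Nat.eqb i n); auto.
    + apply (IHphi (upd e1 n a) (upd e2 n a)); auto. intro i; unfold upd; destruct (Nat.eqb i n); auto.
Qed.

Fixpoint tren (s : nat -> nat) (t : term F) : term F :=
  match t with tvar i => tvar (s i) | tapp f ts => tapp f (map (tren s) ts) end.

Fixpoint fren (s : nat -> nat) (phi : formula F Rs) : formula F Rs :=
  match phi with
  | fatom r ts => fatom r (map (tren s) ts)
  | feq t1 t2 => feq (tren s t1) (tren s t2)
  | fneg p => fneg (fren s p)
  | fand p q => fand (fren s p) (fren s q)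
  | fex i p => fex (s i) (fren s p)
  end.

Lemma teval_tren (e : nat -> M) s t : teval e (tren s t) = teval (fun i => e (s i)) t.
Proof.
  induction t using term_ind2; simpl; auto.
  f_equal. rewrite map_map. induction H; simpl; auto. f_equal; auto.
Qed.

Lemma sat_fren s (hs : forall i j, s i = s j -> i = j) (phi : formula F Rs) :
  forall e, sat e (fren s phi) <-> sat (fun i => e (s i)) phi.
Proof.
  induction phi; intros e; simpl.
  - rewrite map_map. replace (map (fun x => teval e (tren s x)) l) with (map (teval (fun i => e (s i))) l); [tauto|].
    apply map_ext; intro; symmetry; apply teval_tren.
  - rewrite !teval_tren; tauto.
  - rewrite IHphi; tauto.
  - rewrite IHphi1, IHphi2; tauto.
  - split; intros [a ha]; exists a.
    + rewrite IHphi in ha. revert ha. apply sat_ext. intro i. unfold upd.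
      destruct (Nat.eqb_spec (s i) (s n)) as [h|h]; destruct (Nat.eqb_spec i n) as [h'|h']; auto.
      * apply hs in h; contradiction.
      * subst; contradiction.
    + rewrite IHphi. revert ha. apply sat_ext. intro i. unfold upd.
      destruct (Nat.eqb_spec (s i) (s n)) as [h|h]; destruct (Nat.eqb_spec i n) as [h'|h']; auto.
      * apply hs in h; contradiction.
      * subst; contradiction.
Qed.

Lemma definable_iff n (P Q : list M -> Prop) : definable n P ->
  (forall l, length l = n -> (P l <-> Q l)) -> definable n Q.
Proof. intros [phi [e h]] hPQ. exists phi, e. intros l hl. rewrite <- hPQ; auto. Qed.

Lemma definable_neg n (P : list M -> Prop) : definable n P -> definable n (fun l => ~ P l).
Proof. intros [phi [e h]]. exists (fneg phi), e. intros l hl. simpl. rewrite (h l hl). tauto. Qed.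

Lemma env_app_lt (l : list M) e i : i < length l -> exists a, nth_error l i = Some a /\ env_app l e i = a.
Proof. intro h. unfold env_app. destruct (nth_error l i) eqn:E.
  - eauto.
  - apply nth_error_None in E. lia. Qed.
Lemma env_app_ge (l : list M) e i : length l <= i -> env_app l e i = e i.
Proof. intro h. unfold env_app. rewrite (proj2 (nth_error_None l i) h). auto. Qed.

Lemma env_app_lt_eq (l : list M) e e' i : i < length l -> env_app l e i = env_app l e' i.
Proof. intro h. destruct (env_app_lt l e i h) as [a [h1 h2]]. destruct (env_app_lt l e' i h) as [b [h3 h4]].
  congruence. Qed.

Lemma ev2 i : Nat.even (2 * i) = true.
Proof. apply Nat.even_spec. exists i; lia. Qed.
Lemma od2 i : Nat.even (2 * i + 1) = false.
Proof. destruct (Nat.even (2*i+1)) eqn:E; auto. apply Nat.even_spec in E. destruct E as [x hx]; lia. Qed.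

Lemma definable_and n (P Q : list M -> Prop) : definable n P -> definable n Q -> definable n (fun l => P l /\ Q l).
Proof.
  intros [p1 [e1 h1]] [p2 [e2 h2]].
  set (s1 := fun i => if Nat.ltb i n then i else 2 * i).
  set (s2 := fun i => if Nat.ltb i n then i else 2 * i + 1).
  set (e := fun j => if Nat.even j then e1 (Nat.div2 j) else e2 (Nat.div2 j)).
  assert (i1 : forall i j, s1 i = s1 j -> i = j).
  { intros i j; unfold s1; destruct (Nat.ltb_spec i n); destruct (Nat.ltb_spec j n); lia. }
  assert (i2 : forall i j, s2 i = s2 j -> i = j).
  { intros i j; unfold s2; destruct (Nat.ltb_spec i n); destruct (Nat.ltb_spec j n); lia. }
  exists (fand (fren s1 p1) (fren s2 p2)), e. intros l hl. simpl.
  rewrite (sat_fren s1 i1), (sat_fren s2 i2), (h1 l hl), (h2 l hl).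
  assert (E1 : sat (fun i => env_app l e (s1 i)) p1 <-> sat (env_app l e1) p1).
  { apply sat_ext. intro i. unfold s1. destruct (Nat.ltb_spec i n); [apply env_app_lt_eq; lia|].
    rewrite !env_app_ge by lia. unfold e. rewrite ev2. rewrite Nat.div2_double; auto. }
  assert (E2 : sat (fun i => env_app l e (s2 i)) p2 <-> sat (env_app l e2) p2).
  { apply sat_ext. intro i.
    unfold s2. destruct (Nat.ltb_spec i n); [apply env_app_lt_eq; lia|].
    rewrite !env_app_ge by lia. unfold e.
    rewrite od2. replace (2 * i + 1) with (S (2 * i)) by lia. rewrite Nat.div2_succ_double; auto. }
  tauto.
Qed.

Fixpoint fexs (n m : nat) (phi : formula F Rs) : formula F Rs :=
  match m with O => phi | S m => fex n (fexs (S n) m phi) end.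
Fixpoint upds (e : nat -> M) (n : nat) (l : list M) : nat -> M :=
  match l with nil => e | a :: l => upds (upd e n a) (S n) l end.

Lemma sat_fexs phi m : forall n e, sat e (fexs n m phi) <-> exists l, length l = m /\ sat (upds e n l) phi.
Proof.
  induction m; intros n e; simpl.
  - split; [intro h; exists nil; auto| intros [l [hl h]]; destruct l; simpl in *; auto; discriminate].
  - split.
    + intros [a ha]. apply IHm in ha. destruct ha as [l [hl h]]. exists (a :: l); simpl; auto.
    + intros [l [hl h]]. destruct l as [|a l]; [discriminate|]. exists a. apply IHm. exists l. simpl in *; auto.
Qed.

Lemma upds_ext l : forall n e1 e2, (forall i, e1 i = e2 i) -> forall i, upds e1 n l i = upds e2 n l i.
Proof.
  induction l; intros n e1 e2 h i; simpl; auto. apply IHl. intro j; unfold upd; destruct (Nat.eqb j n); auto.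
Qed.

Lemma upds_env l : forall h e, upds (env_app h e) (length h) l =1 env_app (h ++ l) e.
Proof.
  induction l as [|a l IH]; intros h e i; simpl.
  - rewrite app_nil_r; auto.
  - assert (E : forall j, upd (env_app h e) (length h) a j = env_app (h ++ [a]) e j).
    { intro j. unfold upd, env_app. destruct (Nat.eqb_spec j (length h)) as [->|ne].
      - rewrite nth_error_app2 by lia. rewrite Nat.sub_diag. auto.
      - destruct (Nat.lt_ge_cases j (length h)).
        + rewrite nth_error_app1; auto.
        + rewrite (proj2 (nth_error_None h j)) by lia. rewrite (proj2 (nth_error_None (h ++ [a]) j)); auto.
          rewrite length_app; simpl; lia. }
    rewrite (upds_ext l _ _ _ E).
    replace (S (length h)) with (length (h ++ [a])) by (rewrite length_app; simpl; lia).
    rewrite IH. rewrite <- app_assoc. auto.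
Qed.

Lemma definable_proj n m (Q : list M -> Prop) : definable (n + m) Q ->
  definable n (fun h => exists l, length l = m /\ Q (h ++ l)).
Proof.
  intros [phi [e hQ]]. exists (fexs n m phi), e. intros h hh.
  rewrite sat_fexs. split; intros [l [hl H]]; exists l; split; auto.
  - rewrite <- hh. rewrite (sat_ext phi _ _ (upds_env l h e)). apply hQ; auto.
    rewrite length_app; lia.
  - rewrite <- hh in H. rewrite (sat_ext phi _ _ (upds_env l h e)) in H. apply hQ; auto.
    rewrite length_app; lia.
Qed.

Lemma definable_shift j kk (P : list M -> Prop) : definable kk P -> definable (j + kk) (fun b => P (skipn j b)).
Proof.
  intros [phi [e hP]].
  set (s := fun i => i + j). assert (hs : forall a b, s a = s b -> a = b) by (unfold s; intros; lia).
  exists (fren s phi), (fun p => e (p - j)). intros b hb.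
  rewrite (sat_fren s hs). rewrite hP by (rewrite length_skipn; lia).
  apply sat_ext. intro i. unfold s. destruct (Nat.lt_ge_cases i kk).
  - unfold env_app. rewrite nth_error_skipn. rewrite (Nat.add_comm i j).
    destruct (nth_error b (j + i)) eqn:E; [auto|apply nth_error_None in E; lia].
  - rewrite !env_app_ge; try (rewrite length_skipn); try lia. f_equal; lia.
Qed.
End Syn.

Open Scope R_scope.

Lemma zorn_max (T:Type) (P : (T->Prop)->Prop) :
 (forall F : (T->Prop)->Prop, (forall A, F A -> P A) ->
   (forall A B, F A -> F B -> (forall x, A x -> B x) \/ (forall x, B x -> A x)) ->
   P (fun x => exists A, F A /\ A x)) ->
 exists A, P A /\ forall B, (forall x, A x -> B x) -> P B -> forall x, B x -> A x.
Proof.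
  intros H.
  destruct (@classical_sets.Zorn_bigcup T P) as [A [PA HA]].
  - intros F FP Ftot.
    assert (E : classical_sets.bigcup F (fun X => X) = (fun x => exists A, F A /\ A x)).
    { apply functional_extensionality; intro x; apply propositional_extensionality.
      unfold classical_sets.bigcup, classical_sets.mkset; split.
      - intros [i Fi ix]; eauto.
      - intros [i [Fi ix]]; econstructor; eauto. }
    rewrite E. apply H; auto.
  - exists A; split; auto. intros B AB PB x Bx.
    apply NNPP; intro nAx. apply (HA B); auto.
    split; [exact AB|]. intro BA. apply nAx. apply BA. exact Bx.
Qed.

Lemma zorn_min (T:Type) (Q : (T->Prop)->Prop) (S0 : T -> Prop) :
  Q S0 ->
  (forall F : (T -> Prop) -> Prop,
     (forall S, F S -> Q S /\ forall x, S x -> S0 x) ->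
     (forall A B, F A -> F B -> (forall x, A x -> B x) \/ (forall x, B x -> A x)) ->
     Q (fun x => S0 x /\ forall S, F S -> S x)) ->
  exists S, Q S /\ (forall x, S x -> S0 x) /\
    forall S', Q S' -> (forall x, S' x -> S x) -> forall x, S x -> S' x.
Proof.
  intros Q0 Hch.
  set (P := fun A : T -> Prop => (forall x, A x -> S0 x) /\ Q (fun x => S0 x /\ ~ A x)).
  destruct (zorn_max T P) as [A [[AS0 QA] Amax]].
  - intros F FP Ftot. split.
    + intros x [A0 [FA0 A0x]]. exact (proj1 (FP A0 FA0) x A0x).
    + set (F' := fun S : T -> Prop => exists A0, F A0 /\ S = (fun x => S0 x /\ ~ A0 x)).
      assert (E : (fun x => S0 x /\ ~ (exists A0, F A0 /\ A0 x)) = (fun x => S0 x /\ forall S, F' S -> S x)).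
      { apply functional_extensionality; intro x; apply propositional_extensionality; split.
        - intros [s0 nA]. split; auto. intros S [A0 [FA0 ->]]. split; auto. intro a; apply nA; eauto.
        - intros [s0 H]. split; auto. intros [A0 [FA0 A0x]].
          destruct (H (fun x => S0 x /\ ~ A0 x)) as [_ h]; [exists A0; auto| auto]. }
      rewrite E. apply Hch.
      * intros S [A0 [FA0 ->]]. split; [apply (FP A0 FA0)|]. intros x [h _]; exact h.
      * intros S1 S2 [A1 [FA1 ->]] [A2 [FA2 ->]].
        destruct (Ftot A1 A2 FA1 FA2) as [h|h]; [right|left]; intros x [s nx]; split; auto.
  - exists (fun x => S0 x /\ ~ A x). split; [exact QA|]. split; [intros x [h _]; exact h|].
    intros S' QS' S'S x [s0x nAx].
    apply NNPP; intro nS'x.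
    assert (Hs : forall y, S' y -> S0 y) by (intros y h; exact (proj1 (S'S y h))).
    set (B := fun y => S0 y /\ ~ S' y).
    assert (PB : P B).
    { split; [intros y [h _]; exact h|].
      assert (E : (fun y => S0 y /\ ~ B y) = S').
      { apply functional_extensionality; intro y; apply propositional_extensionality; split.
        - intros [h1 h2]. apply NNPP; intro h3. apply h2. split; auto.
        - intro h; split; [apply Hs; auto| intros [_ h']; auto]. }
      rewrite E; exact QS'. }
    assert (AB : forall y, A y -> B y).
    { intros y Ay. split; [apply AS0; auto|]. intro h. apply (proj2 (S'S y h)); auto. }
    apply nAx. apply (Amax B AB PB). split; auto.
Qed.

Definition nb {J : Type} (js : list J) (eps : R) (f g : J -> R) : Prop :=
  forall j, In j js -> Rabs (g j - f j) < eps.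

Definition popen {J : Type} (A : J -> Prop) (U : (J -> R) -> Prop) : Prop :=
  forall f, U f -> exists (js : list J) (eps : R), (0 < eps)%R /\ (forall j, In j js -> A j) /\
    forall g, (forall j, In j js -> (Rabs (g j - f j) < eps)%R) -> U g.

Definition pclosed {J : Type} (A : J -> Prop) (C : (J -> R) -> Prop) : Prop :=
  popen A (fun f => ~ C f).

Definition FIP {P : Type} (Phi : (P -> Prop) -> Prop) : Prop :=
  forall Cs : list (P -> Prop), (forall C, In C Cs -> Phi C) -> exists f, forall C, In C Cs -> C f.

Section Compact.
Variables (J : Type) (A : J -> Prop) (Phi : ((J -> R) -> Prop) -> Prop).
Hypothesis Hcl : forall C, Phi C -> pclosed A C.
Variable C0 : (J -> R) -> Prop.
Hypothesis HC0 : Phi C0.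
Hypothesis HC0b : forall f, C0 f -> forall j, A j -> 0 <= f j <= 1.
Hypothesis Hfip : FIP Phi.

Let Pz (Mf : ((J -> R) -> Prop) -> Prop) := FIP (fun C => Phi C \/ Mf C).

Lemma chain_fip : forall F : (((J -> R) -> Prop) -> Prop) -> Prop,
  (forall Mf, F Mf -> Pz Mf) ->
  (forall A1 B1, F A1 -> F B1 -> (forall x, A1 x -> B1 x) \/ (forall x, B1 x -> A1 x)) ->
  Pz (fun C => exists Mf, F Mf /\ Mf C).
Proof.
  intros F FP Ftot Cs HCs.
  assert (H : (forall C, In C Cs -> Phi C) \/ exists Mf, F Mf /\ forall C, In C Cs -> Phi C \/ Mf C).
  { clear -Ftot HCs. induction Cs as [|C Cs IH].
    - left; intros C [].
    - assert (IH' := IH (fun D h => HCs D (or_intror h))).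
      destruct (HCs C (or_introl eq_refl)) as [hC|[M1 [FM1 M1C]]].
      + destruct IH' as [h|[Mf [FMf h]]].
        * left; intros D [<-|hD]; auto.
        * right; exists Mf; split; auto; intros D [<-|hD]; auto.
      + destruct IH' as [h|[Mf [FMf h]]].
        * right; exists M1; split; auto; intros D [<-|hD]; auto.
        * destruct (Ftot M1 Mf FM1 FMf) as [s|s].
          -- right; exists Mf; split; auto; intros D [<-|hD]; [right; auto|].
             destruct (h D hD); auto.
          -- right; exists M1; split; auto; intros D [<-|hD]; [right; auto|].
             destruct (h D hD); auto. }
  destruct H as [h|[Mf [FMf h]]].
  - apply Hfip; auto.
  - apply (FP Mf FMf); auto.
Qed.

Lemma exists_max : exists Mf, Pz Mf /\
  forall B, (forall x, Mf x -> B x) -> Pz B -> forall x, B x -> Mf x.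
Proof.
  apply zorn_max. intros F FP Ftot. apply chain_fip; auto.
Qed.

Theorem compact_fip : exists f, forall C, Phi C -> C f.
Proof.
  destruct exists_max as [Mf [PM Mmax]].
  set (N := fun C => Phi C \/ Mf C).
  assert (addable : forall S, (forall Cs, (forall C, In C Cs -> N C) -> exists f, S f /\ forall C, In C Cs -> C f) -> Mf S).
  { intros S HS. apply (Mmax (fun C => Mf C \/ C = S)); [auto| |right; auto].
    intros Cs HCs.
    set (Cs' := filter (fun D => if excluded_middle_informative (N D) then true else false) Cs).
    destruct (HS Cs') as [f [Sf Hf]].
    { intros C hC. unfold Cs' in hC. apply filter_In in hC. destruct hC as [_ h].
      destruct (excluded_middle_informative (N C)); auto; discriminate. }
    exists f. intros C hC. destruct (HCs C hC) as [h|[h| ->]]; auto.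
    - apply Hf. unfold Cs'. apply filter_In; split; auto.
      destruct (excluded_middle_informative (N C)) as [_|n]; auto. exfalso; apply n; left; auto.
    - apply Hf. unfold Cs'. apply filter_In; split; auto.
      destruct (excluded_middle_informative (N C)) as [_|n]; auto. exfalso; apply n; right; auto. }
  assert (super : forall C S, N C -> (forall f, C f -> S f) -> Mf S).
  { intros C S NC CS. apply addable. intros Cs HCs.
    destruct (PM (C :: Cs)) as [f Hf].
    { intros D [<-|h]; auto. apply HCs; auto. }
    exists f; split; [apply CS, Hf; left; auto|]. intros D hD; apply Hf; right; auto. }
  assert (inter : forall C1 C2, N C1 -> N C2 -> Mf (fun f => C1 f /\ C2 f)).
  { intros C1 C2 N1 N2. apply addable. intros Cs HCs.
    destruct (PM (C1 :: C2 :: Cs)) as [f Hf].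
    { intros D [<-|[<-|h]]; auto; apply HCs; auto. }
    exists f; split; [split; apply Hf; simpl; auto|]. intros D hD; apply Hf; right; right; auto. }
  assert (dich : forall S1 S2, (forall f, S1 f \/ S2 f) -> Mf S1 \/ Mf S2).
  { intros S1 S2 H12. apply NNPP; intro hn. apply not_or_and in hn. destruct hn as [n1 n2].
    assert (e1 : exists Cs, (forall C, In C Cs -> N C) /\ ~ exists f, S1 f /\ forall C, In C Cs -> C f).
    { apply NNPP; intro h. apply n1, addable. intros Cs HCs. apply NNPP; intro h'. apply h. exists Cs; split; [exact HCs|exact h']. }
    assert (e2 : exists Cs, (forall C, In C Cs -> N C) /\ ~ exists f, S2 f /\ forall C, In C Cs -> C f).
    { apply NNPP; intro h. apply n2, addable. intros Cs HCs. apply NNPP; intro h'. apply h. exists Cs; split; [exact HCs|exact h']. }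
    destruct e1 as [Cs1 [N1 h1]]. destruct e2 as [Cs2 [N2 h2]].
    destruct (PM (Cs1 ++ Cs2)) as [f Hf].
    { intros C hC. apply in_app_or in hC. destruct hC as [hC|hC]; [apply N1|apply N2]; auto. }
    destruct (H12 f) as [s|s].
    - apply h1. exists f; split; auto. intros C hC; apply Hf, in_or_app; auto.
    - apply h2. exists f; split; auto. intros C hC; apply Hf, in_or_app; auto. }
  assert (mem : forall S, Mf S -> exists f, S f /\ C0 f).
  { intros S hS. destruct (PM [S; C0]) as [f Hf].
    { intros D [<-|[<-|[]]]; [right|left]; auto. }
    exists f; split; apply Hf; simpl; auto. }
  set (E := fun j t => Mf (fun f => t <= f j)).
  assert (Eub : forall j, A j -> forall t, E j t -> t <= 1).
  { intros j Aj t Et. destruct (mem _ Et) as [f [h1 h2]]. specialize (HC0b f h2 j Aj). lra. }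
  assert (E0 : forall j, A j -> E j 0).
  { intros j Aj. apply (super C0); [left; auto|]. intros f hf. apply (HC0b f hf j Aj). }
  assert (lubex : forall j, exists s, A j -> is_lub (E j) s).
  { intros j. destruct (classic (A j)) as [Aj|nAj]; [|exists 0; intro; contradiction].
    destruct (completeness (E j)) as [s hs].
    - exists 1. intros t ht. apply (Eub j Aj t ht).
    - exists 0. apply E0; auto.
    - exists s; auto. }
  set (p := fun j => proj1_sig (constructive_indefinite_description _ (lubex j))).
  assert (hp : forall j, A j -> is_lub (E j) (p j)).
  { intros j Aj. unfold p. destruct (constructive_indefinite_description _ (lubex j)) as [s hs]. simpl; auto. }
  assert (coord : forall j eps, A j -> 0 < eps -> Mf (fun f => Rabs (f j - p j) < eps)).
  { intros j eps Aj heps. destruct (hp j Aj) as [ub lub].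
    assert (h1 : Mf (fun f => p j - eps/2 <= f j)).
    { apply NNPP; intro h. assert (p j <= p j - eps/2); [|lra].
      apply lub. intros t Et. destruct (Rle_dec t (p j - eps/2)) as [r|r]; auto.
      exfalso; apply h. apply (super (fun f => t <= f j)); [right; auto|].
      intros f hf. lra. }
    assert (h2 : ~ Mf (fun f => p j + eps/2 <= f j)).
    { intro h. specialize (ub _ h). lra. }
    destruct (dich (fun f => p j + eps/2 <= f j) (fun f => f j <= p j + eps/2)) as [h3|h3].
    - intro f. lra.
    - contradiction.
    - apply (super (fun f => p j - eps/2 <= f j /\ f j <= p j + eps/2)); [right; apply inter; right; auto|].
      intros f [a b]. apply Rabs_def1; lra. }
  assert (basic : forall js eps, (forall j, In j js -> A j) -> 0 < eps ->
      Mf (fun g => forall j, In j js -> Rabs (g j - p j) < eps)).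
  { induction js as [|j js IH]; intros eps hA heps.
    - apply (super C0); [left; auto|]. intros f _ j [].
    - apply (super (fun f => Rabs (f j - p j) < eps /\ (forall j, In j js -> Rabs (f j - p j) < eps))).
      + right. apply inter; right; [apply coord; auto; apply hA; left; auto|].
        apply IH; auto. intros; apply hA; right; auto.
      + intros f [a b] j' [<-|h]; auto. }
  exists p. intros C PC. apply NNPP; intro nC.
  destruct (Hcl C PC p nC) as [js [eps [heps [hA hU]]]].
  destruct (PM [C; fun g => forall j, In j js -> Rabs (g j - p j) < eps]) as [f Hf].
  { intros D [<-|[<-|[]]]; [left; auto|right; apply basic; auto]. }
  apply (hU f); apply Hf; simpl; auto.
Qed.
End Compact.

Fixpoint rsum (n : nat) (a : nat -> R) : R :=
  match n with O => 0 | S n => rsum n a + a n end.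

Lemma rsum_ext n a b : (forall i, (i < n)%nat -> a i = b i) -> rsum n a = rsum n b.
Proof. induction n; simpl; intros; auto. rewrite IHn, H; auto. Qed.

Lemma rsum_plus n a b : rsum n (fun i => a i + b i) = rsum n a + rsum n b.
Proof. induction n; simpl; auto; lra. Qed.
Lemma rsum_scal n c a : rsum n (fun i => c * a i) = c * rsum n a.
Proof. induction n; simpl; auto. lra. rewrite IHn. ring. Qed.
Lemma rsum_nonneg n a : (forall i, (i < n)%nat -> 0 <= a i) -> 0 <= rsum n a.
Proof. induction n; simpl; intros; [lra|]. assert (0 <= rsum n a) by (apply IHn; intros; apply H; lia).
  assert (0 <= a n) by (apply H; lia). lra. Qed.
Lemma rsum_le_elem n a i : (forall i, (i < n)%nat -> 0 <= a i) -> (i < n)%nat -> a i <= rsum n a.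
Proof. induction n; simpl; intros; [lia|].
  assert (0 <= rsum n a) by (apply rsum_nonneg; intros; apply H; lia).
  destruct (Nat.eq_dec i n) as [->|ne]; [lra|].
  assert (a i <= rsum n a) by (apply IHn; intros; [apply H; lia| lia]).
  assert (0 <= a n) by (apply H; lia). lra. Qed.
Lemma rsum_zero n a : (forall i, (i < n)%nat -> a i = 0) -> rsum n a = 0.
Proof. induction n; simpl; intros; auto. rewrite IHn, H; auto; lra. Qed.
Lemma rsum_delta n i (a : nat -> R) : (i < n)%nat -> rsum n (fun j => if Nat.eqb j i then a j else 0) = a i.
Proof. induction n; simpl; intros; [lia|].
  destruct (Nat.eqb_spec n i) as [->|ne].
  - rewrite rsum_zero; [lra|]. intros j hj. destruct (Nat.eqb_spec j i); [lia|auto].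
  - rewrite IHn; [lra|lia]. Qed.

Definition cont {J : Type} (A : J -> Prop) (F : (J -> R) -> R) : Prop :=
  forall f eps, 0 < eps -> exists js d, 0 < d /\ (forall j, In j js -> A j) /\
    forall g, nb js d f g -> Rabs (F g - F f) < eps.

Section Topo.
Variables (J : Type) (A : J -> Prop).
Implicit Types (js : list J) (f g h : J -> R) (d eps : R).

Lemma nb_app js1 js2 d f g : nb js1 d f g -> nb js2 d f g -> nb (js1 ++ js2) d f g.
Proof. intros h1 h2 j hj. apply in_app_or in hj. destruct hj; auto. Qed.
Lemma nb_l js1 js2 d f g : nb (js1 ++ js2) d f g -> nb js1 d f g.
Proof. intros h j hj. apply h, in_or_app; auto. Qed.
Lemma nb_r js1 js2 d f g : nb (js1 ++ js2) d f g -> nb js2 d f g.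
Proof. intros h j hj. apply h, in_or_app; auto. Qed.
Lemma nb_mono js d d' f g : d <= d' -> nb js d f g -> nb js d' f g.
Proof. intros hd h j hj. specialize (h j hj). lra. Qed.
Lemma nb_refl js d f : 0 < d -> nb js d f f.
Proof. intros hd j _. rewrite Rminus_diag, Rabs_R0. lra. Qed.
Lemma nb_sym js d f g : nb js d f g -> nb js d g f.
Proof. intros h j hj. rewrite Rabs_minus_sym. auto. Qed.
Lemma nb_trans js d1 d2 f g h : nb js d1 f g -> nb js d2 g h -> nb js (d1 + d2) f h.
Proof. intros h1 h2 j hj. specialize (h1 j hj). specialize (h2 j hj).
  replace (h j - f j) with ((h j - g j) + (g j - f j)) by ring.
  eapply Rle_lt_trans; [apply Rabs_triang|lra]. Qed.
Lemma allA_app (js1 js2 : list J) : (forall j, In j js1 -> A j) -> (forall j, In j js2 -> A j) ->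
  forall j, In j (js1 ++ js2) -> A j.
Proof. intros h1 h2 j hj. apply in_app_or in hj. destruct hj; auto. Qed.

Lemma nb_open js eps f g : nb js eps f g -> exists d, 0 < d /\ forall h, nb js d g h -> nb js eps f h.
Proof.
  induction js as [|j js IH]; intros H.
  - exists 1. split; [lra|]. intros h _ j [].
  - destruct IH as [d [hd Hd]]. { intros j' hj'. apply H; right; auto. }
    set (d1 := eps - Rabs (g j - f j)).
    assert (hd1 : 0 < d1) by (unfold d1; specialize (H j (or_introl eq_refl)); lra).
    exists (Rmin d d1). split; [apply Rmin_glb_lt; auto|].
    intros h hh j' [<-|hj'].
    + specialize (hh j (or_introl eq_refl)). assert (Rabs (h j - g j) < d1).
      { eapply Rlt_le_trans; [exact hh| apply Rmin_r]. }
      replace (h j - f j) with ((h j - g j) + (g j - f j)) by ring.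
      eapply Rle_lt_trans; [apply Rabs_triang|]. unfold d1 in *; lra.
    + apply Hd; auto. intros j'' hj''. eapply Rlt_le_trans; [apply hh; right; auto| apply Rmin_l].
Qed.

Lemma popen_nb js eps f : (forall j, In j js -> A j) -> popen A (nb js eps f).
Proof.
  intros hA g hg. destruct (nb_open js eps f g hg) as [d [hd Hd]].
  exists js, d. split; auto.
Qed.

Lemma cont_coord j : A j -> cont A (fun f => f j).
Proof. intros Aj f eps he. exists [j], eps. split; auto. split. intros j' [<-|[]]; auto.
  intros g hg. apply hg; left; auto. Qed.
Lemma cont_const c : cont A (fun _ => c).
Proof. intros f eps he. exists [], 1. split; [lra|]. split; [intros _ []|].
  intros g _. rewrite Rminus_diag, Rabs_R0; lra. Qed.
Lemma cont_plus F H : cont A F -> cont A H -> cont A (fun f => F f + H f).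
Proof.
  intros cF cH f eps he.
  destruct (cF f (eps/2)) as [js1 [d1 [hd1 [hA1 h1]]]]; [lra|].
  destruct (cH f (eps/2)) as [js2 [d2 [hd2 [hA2 h2]]]]; [lra|].
  exists (js1 ++ js2), (Rmin d1 d2). split; [apply Rmin_glb_lt; auto|]. split; [apply allA_app; auto|].
  intros g hg. assert (a := h1 g (nb_mono _ _ _ _ _ (Rmin_l d1 d2) (nb_l _ _ _ _ _ hg))).
  assert (b := h2 g (nb_mono _ _ _ _ _ (Rmin_r d1 d2) (nb_r _ _ _ _ _ hg))).
  replace (F g + H g - (F f + H f)) with ((F g - F f) + (H g - H f)) by ring.
  eapply Rle_lt_trans; [apply Rabs_triang|lra].
Qed.
Lemma cont_opp F : cont A F -> cont A (fun f => - F f).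
Proof. intros cF f eps he. destruct (cF f eps he) as [js [d [hd [hA h]]]].
  exists js, d. repeat split; auto. intros g hg. specialize (h g hg).
  replace (- F g - - F f) with (- (F g - F f)) by ring. rewrite Rabs_Ropp; auto. Qed.
Lemma cont_mult F H : cont A F -> cont A H -> cont A (fun f => F f * H f).
Proof.
  intros cF cH f eps he.
  set (a := Rabs (F f)). set (b := Rabs (H f)).
  assert (ha : 0 <= a) by apply Rabs_pos. assert (hb : 0 <= b) by apply Rabs_pos.
  set (e1 := Rmin 1 (eps / (2 * (b + 1)))).
  set (e2 := eps / (2 * (a + 2))).
  assert (he1 : 0 < e1). { unfold e1. apply Rmin_glb_lt; [lra|]. apply Rdiv_lt_0_compat; lra. }
  assert (he2 : 0 < e2). { unfold e2. apply Rdiv_lt_0_compat; lra. }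
  destruct (cF f e1 he1) as [js1 [d1 [hd1 [hA1 h1]]]].
  destruct (cH f e2 he2) as [js2 [d2 [hd2 [hA2 h2]]]].
  exists (js1 ++ js2), (Rmin d1 d2). split; [apply Rmin_glb_lt; auto|]. split; [apply allA_app; auto|].
  intros g hg. assert (x := h1 g (nb_mono _ _ _ _ _ (Rmin_l d1 d2) (nb_l _ _ _ _ _ hg))).
  assert (y := h2 g (nb_mono _ _ _ _ _ (Rmin_r d1 d2) (nb_r _ _ _ _ _ hg))).
  replace (F g * H g - F f * H f) with ((F g - F f) * H f + F g * (H g - H f)) by ring.
  eapply Rle_lt_trans; [apply Rabs_triang|]. rewrite !Rabs_mult.
  assert (x1 : Rabs (F g - F f) <= 1) by (assert (e1 <= 1) by apply Rmin_l; lra).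
  assert (x2 : Rabs (F g - F f) <= eps / (2 * (b + 1))) by (assert (e1 <= eps / (2 * (b + 1))) by apply Rmin_r; lra).
  assert (Fg : Rabs (F g) <= a + 1).
  { replace (F g) with ((F g - F f) + F f) by ring. eapply Rle_trans; [apply Rabs_triang|]. unfold a; lra. }
  assert (t1 : Rabs (F g - F f) * b <= eps / 2).
  { apply Rle_trans with (eps / (2 * (b+1)) * (b + 1)).
    - apply Rmult_le_compat; try lra; apply Rabs_pos.
    - right. field. lra. }
  assert (t2 : Rabs (F g) * Rabs (H g - H f) < eps / 2).
  { apply Rle_lt_trans with ((a + 1) * Rabs (H g - H f)).
    - apply Rmult_le_compat_r; [apply Rabs_pos|auto].
    - apply Rle_lt_trans with ((a + 1) * e2).
      + apply Rmult_le_compat_l; lra.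
      + unfold e2. apply Rlt_le_trans with ((a+2) * (eps / (2 * (a + 2)))).
        * apply Rmult_lt_compat_r; [apply Rdiv_lt_0_compat; lra|lra].
        * right. field. lra. }
  fold b. lra.
Qed.
Lemma cont_minus F H : cont A F -> cont A H -> cont A (fun f => F f - H f).
Proof. intros; apply cont_plus; auto; apply cont_opp; auto. Qed.
Lemma cont_rsum n (F : nat -> (J -> R) -> R) : (forall i, (i < n)%nat -> cont A (F i)) ->
  cont A (fun f => rsum n (fun i => F i f)).
Proof. induction n; simpl; intros h. apply cont_const. apply cont_plus; [apply IHn; intros; apply h; lia| apply h; lia]. Qed.

Lemma closed_le F H : cont A F -> cont A H -> pclosed A (fun f => F f <= H f).
Proof.
  intros cF cH f nle. apply Rnot_le_lt in nle.
  set (e := (F f - H f) / 2).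
  destruct (cont_minus F H cF cH f e) as [js [d [hd [hA h]]]]; [unfold e; lra|].
  exists js, d. split; auto. split; auto. intros g hg. specialize (h g hg).
  apply Rabs_def2 in h. unfold e in h. lra.
Qed.
Lemma closed_and C1 C2 : pclosed A C1 -> pclosed A C2 -> pclosed A (fun f => C1 f /\ C2 f).
Proof.
  intros h1 h2 f nf. destruct (classic (C1 f)) as [c1|c1].
  - assert (c2 : ~ C2 f) by (intro; apply nf; auto).
    destruct (h2 f c2) as [js [d [hd [hA h]]]]. exists js, d. repeat split; auto.
    intros g hg [_ c]. apply (h g hg c).
  - destruct (h1 f c1) as [js [d [hd [hA h]]]]. exists js, d. repeat split; auto.
    intros g hg [c _]. apply (h g hg c).
Qed.
Lemma closed_all (I : Type) (C : I -> (J -> R) -> Prop) : (forall i, pclosed A (C i)) ->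
  pclosed A (fun f => forall i, C i f).
Proof.
  intros h f nf. apply not_all_ex_not in nf. destruct nf as [i ni].
  destruct (h i f ni) as [js [d [hd [hA hh]]]]. exists js, d. repeat split; auto.
  intros g hg c. apply (hh g hg (c i)).
Qed.
Lemma closed_or C1 C2 : pclosed A C1 -> pclosed A C2 -> pclosed A (fun f => C1 f \/ C2 f).
Proof.
  intros h1 h2 f nf. apply not_or_and in nf. destruct nf as [n1 n2].
  destruct (h1 f n1) as [js1 [d1 [hd1 [hA1 k1]]]]. destruct (h2 f n2) as [js2 [d2 [hd2 [hA2 k2]]]].
  exists (js1 ++ js2), (Rmin d1 d2). split; [apply Rmin_glb_lt; auto|]. split; [apply allA_app; auto|].
  intros g hg [c|c].
  - apply (k1 g); auto. apply (nb_mono _ _ _ _ _ (Rmin_l d1 d2) (nb_l _ _ _ _ _ hg)).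
  - apply (k2 g); auto. apply (nb_mono _ _ _ _ _ (Rmin_r d1 d2) (nb_r _ _ _ _ _ hg)).
Qed.
Lemma closed_true : pclosed A (fun _ => True).
Proof. intros f nf; exfalso; auto. Qed.
Lemma closed_ext C1 C2 : pclosed A C1 -> (forall f, C1 f <-> C2 f) -> pclosed A C2.
Proof. intros h e f nf. destruct (h f) as [js [d [hd [hA hh]]]]. { rewrite e; auto. }
  exists js, d. repeat split; auto. intros g hg c. apply (hh g hg). apply e; auto. Qed.
Lemma closed_eq F H : cont A F -> cont A H -> pclosed A (fun f => F f = H f).
Proof.
  intros cF cH. apply (closed_ext _ _ (closed_and _ _ (closed_le F H cF cH) (closed_le H F cH cF))).
  intros f; split; [intros [a b]; lra| intros e; rewrite e; lra].
Qed.
Lemma closed_not_open U : popen A U -> pclosed A (fun f => ~ U f).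
Proof. intros h f nf. apply NNPP in nf. destruct (h f nf) as [js [d [hd [hA hh]]]].
  exists js, d. repeat split; auto. Qed.


Lemma closed_impl (P : Prop) (C : (J -> R) -> Prop) : (P -> pclosed A C) -> pclosed A (fun f => P -> C f).
Proof.
  intros h. destruct (classic P) as [p|p].
  - apply (closed_ext _ _ (h p)). intros; tauto.
  - apply (closed_ext _ _ closed_true). intros; tauto.
Qed.
Lemma cont_abs F : cont A F -> cont A (fun f => Rabs (F f)).
Proof. intros cF f eps he. destruct (cF f eps he) as [js [d [hd [hA h]]]].
  exists js, d. repeat split; auto. intros g hg. eapply Rle_lt_trans; [apply Rabs_triang_inv2|]. auto. Qed.
Definition clo (O : (J -> R) -> Prop) (f : J -> R) : Prop :=
  forall js d, (forall j, In j js -> A j) -> 0 < d -> exists g, O g /\ nb js d f g.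

Lemma clo_closed O : pclosed A (clo O).
Proof.
  intros f nf. unfold clo in nf.
  apply not_all_ex_not in nf. destruct nf as [js nf].
  apply not_all_ex_not in nf. destruct nf as [d nf].
  apply imply_to_and in nf. destruct nf as [hA nf].
  apply imply_to_and in nf. destruct nf as [hd nf].
  exists js, (d/2). split; [lra|]. split; auto.
  intros g hg cg. destruct (cg js (d/2) hA ltac:(lra)) as [h [Oh nh]].
  apply nf. exists h. split; [exact Oh|]. replace d with (d/2 + d/2) by field.
  apply nb_trans with g; auto.
Qed.
Lemma clo_incl (O : (J -> R) -> Prop) f : O f -> clo O f.
Proof. intros h js d _ hd. exists f; split; auto; apply nb_refl; auto. Qed.
Lemma clo_min O C f : pclosed A C -> (forall g, O g -> C g) -> clo O f -> C f.
Proof. intros hC hO hf. apply NNPP; intro n. destruct (hC f n) as [js [d [hd [hA hh]]]].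
  destruct (hf js d hA hd) as [g [Og ng]]. apply (hh g); auto. Qed.

Lemma closed_coords C f g : pclosed A C -> (forall j, A j -> f j = g j) -> C f -> C g.
Proof.
  intros hC e cf. apply NNPP; intro n. destruct (hC g n) as [js [d [hd [hA hh]]]].
  apply (hh f); auto. intros j hj. rewrite e; [|auto]. rewrite Rminus_diag, Rabs_R0; auto.
Qed.
End Topo.

Lemma closed_pull {J J' : Type} (A : J -> Prop) (A' : J' -> Prop) (pi : J -> J') (C : (J -> R) -> Prop) :
  (forall j, A j -> A' (pi j)) -> pclosed A C -> pclosed A' (fun f => C (fun j => f (pi j))).
Proof.
  intros hpi hC f nf. destruct (hC _ nf) as [js [d [hd [hA hh]]]].
  exists (map pi js), d. split; auto. split.
  - intros j' hj'. apply in_map_iff in hj'. destruct hj' as [j [<- hj]]. auto.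
  - intros g hg. apply hh. intros j hj. apply hg. apply in_map; auto.
Qed.
Lemma cont_pull {J J' : Type} (A : J -> Prop) (A' : J' -> Prop) (pi : J -> J') (F : (J -> R) -> R) :
  (forall j, A j -> A' (pi j)) -> cont A F -> cont A' (fun f => F (fun j => f (pi j))).
Proof.
  intros hpi hF f eps he. destruct (hF (fun j => f (pi j)) eps he) as [js [d [hd [hA hh]]]].
  exists (map pi js), d. split; auto. split.
  - intros j' hj'. apply in_map_iff in hj'. destruct hj' as [j [<- hj]]. auto.
  - intros g hg. apply hh. intros j hj. apply hg. apply in_map; auto.
Qed.

Lemma fk {A : Type} n (a b : list A) : length a = n -> firstn n (a ++ b) = a.
Proof. intro h. rewrite firstn_app, <- h, Nat.sub_diag, firstn_all. simpl. apply app_nil_r. Qed.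
Lemma sk {A : Type} n (a b : list A) : length a = n -> skipn n (a ++ b) = b.
Proof. intro h. rewrite skipn_app, <- h, Nat.sub_diag, skipn_all. simpl. auto. Qed.

Lemma pred_ext {T : Type} (P Q : T -> Prop) : (forall x, P x <-> Q x) -> P = Q.
Proof. intro h. apply functional_extensionality; intro x; apply propositional_extensionality; auto. Qed.

Section Meas.
Variables (M : structure) (k : nat) (G : list M -> Prop)
  (mul : list M -> list M -> list M) (inv : list M -> list M) (one : list M).
Hypothesis HG : def_group k G mul inv one.
Hypothesis Htyp : forall p, is_type k G p -> definable_type k G p.

Definition B (X : list M -> Prop) : Prop := inB k G X.
Definition Tr (g : list M) (X : list M -> Prop) : list M -> Prop := fun h => G h /\ X (mul g h).

Lemma Glen g : G g -> length g = k. Proof. apply HG. Qed.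
Lemma Gdef : definable k G. Proof. apply HG. Qed.
Lemma Gone : G one. Proof. apply HG. Qed.
Lemma Gmul g h : G g -> G h -> G (mul g h). Proof. apply HG. Qed.
Lemma Gassoc g h l : G g -> G h -> G l -> mul (mul g h) l = mul g (mul h l). Proof. apply HG. Qed.
Lemma Gonel g : G g -> mul one g = g. Proof. apply HG. Qed.
Lemma Ginv g : G g -> G (inv g). Proof. apply HG. Qed.
Lemma Ginvl g : G g -> mul (inv g) g = one. Proof. apply HG. Qed.
Lemma Ginvr g : G g -> mul g (inv g) = one. Proof. apply HG. Qed.
Lemma Gonerr g : G g -> mul g one = g. Proof. apply HG. Qed.

Lemma definable_subst g m (D : list M -> Prop) : G g -> definable (k + m) D ->
  definable m (fun b => D (g ++ b)).
Proof.
  intros Gg hD.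
  assert (T : is_type k G (fun X => X g)).
  { split; [auto|]. split; [intros; tauto|]. intros; tauto. }
  specialize (Htyp _ T m D hD). simpl in Htyp.
  apply (definable_iff _ _ _ _ Htyp). intros; tauto.
Qed.

Lemma B_G : B G. Proof. split; [apply Gdef| auto]. Qed.

Lemma B_tr g X : G g -> B X -> B (Tr g X).
Proof.
  intros Gg [hX XG]. split; [|intros h [a _]; auto].
  destruct HG as [_ [_ [hGam _]]].
  set (Gam := fun l => G (firstn k l) /\ G (firstn k (skipn k l)) /\
              skipn (k + k) l = mul (firstn k l) (firstn k (skipn k l))) in hGam.
  assert (S1 : definable (k + k)%nat (fun b => Gam (g ++ b))).
  { apply definable_subst; auto. replace (k + (k + k))%nat with (k + k + k)%nat by lia. auto. }
  assert (S2 : definable (k + k)%nat (fun b => X (skipn k b))) by (apply definable_shift; auto).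
  assert (S4 := definable_proj _ k k _ (definable_and _ _ _ _ S1 S2)).
  apply (definable_iff _ _ _ _ S4). intros h hh. unfold Gam, Tr.
  assert (lg := Glen g Gg).
  split.
  - intros [l [hl [[G1 [G2 E]] Xl]]].
    rewrite (fk k g (h++l) lg) in G1, E. rewrite (sk k g (h++l) lg) in G2, E.
    rewrite (fk k h l hh) in G2, E.
    rewrite (sk k h l hh) in Xl.
    rewrite app_assoc in E. rewrite (sk (k+k)%nat (g++h) l) in E by (rewrite length_app; lia).
    subst l. auto.
  - intros [Gh Xm]. exists (mul g h). split; [apply Glen, Gmul; auto|].
    rewrite (fk k g _ lg), (sk k g _ lg), (fk k h _ hh), (sk k h _ hh).
    rewrite app_assoc, (sk (k+k)%nat (g++h)) by (rewrite length_app; lia). auto.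
Qed.

Lemma B_diff X : B X -> B (fun g => G g /\ ~ X g).
Proof.
  intros [hX XG]. split; [|intros g [a _]; auto].
  apply definable_and; [apply Gdef| apply definable_neg; auto].
Qed.

Lemma B_or X Y : B X -> B Y -> B (fun g => X g \/ Y g).
Proof.
  intros [hX XG] [hY YG]. split; [|intros g [a|a]; auto].
  assert (h := definable_neg _ _ _ (definable_and _ _ _ _ (definable_neg _ _ _ hX) (definable_neg _ _ _ hY))).
  apply (definable_iff _ _ _ _ h). intros; tauto.
Qed.

Lemma Tr_comp g h X : G g -> G h -> Tr h (Tr g X) = Tr (mul g h) X.
Proof.
  intros Gg Gh. apply pred_ext; intro a. unfold Tr. split.
  - intros [Ga [Gha Xa]]. rewrite Gassoc; auto.
  - intros [Ga Xa]. rewrite Gassoc in Xa; auto. split; auto. split; auto. apply Gmul; auto.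
Qed.
Lemma Tr_one X : B X -> Tr one X = X.
Proof.
  intros [_ XG]. apply pred_ext; intro a. unfold Tr. split.
  - intros [Ga Xa]. rewrite Gonel in Xa; auto.
  - intro Xa. assert (Ga := XG a Xa). rewrite Gonel; auto.
Qed.
Lemma Tr_G g : G g -> Tr g G = G.
Proof. intro Gg. apply pred_ext; intro a. unfold Tr. split; [tauto|]. intro Ga; split; auto; apply Gmul; auto. Qed.
Lemma Tr_or g X Y : Tr g (fun a => X a \/ Y a) = (fun a => Tr g X a \/ Tr g Y a).
Proof. apply pred_ext; intro a. unfold Tr. tauto. Qed.
Definition Pt := (list M -> Prop) -> R.
Definition KM (mu : Pt) : Prop := keisler k G mu.
Definition nz (mu : Pt) : Prop := forall X, ~ B X -> mu X = 0.
Definition normz (mu : Pt) : Pt := fun X => if excluded_middle_informative (B X) then mu X else 0.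
Definition act (g : list M) (mu : Pt) : Pt := normz (mtrans G mul g mu).
Definition mix (t : R) (a b : Pt) : Pt := fun X => t * a X + (1 - t) * b X.
Definition eqB (a b : Pt) : Prop := forall X, B X -> a X = b X.
Definition Cl (C : Pt -> Prop) : Prop := pclosed B C.

Lemma normz_nz mu : nz (normz mu).
Proof. intros X nX. unfold normz. destruct (excluded_middle_informative (B X)); tauto. Qed.
Lemma normz_eqB mu : eqB (normz mu) mu.
Proof. intros X hX. unfold normz. destruct (excluded_middle_informative (B X)); tauto. Qed.
Lemma nz_eq a b : nz a -> nz b -> eqB a b -> a = b.
Proof. intros ha hb e. apply functional_extensionality; intro X. destruct (classic (B X)).
  - apply e; auto. - rewrite ha, hb; auto. Qed.
Lemma eqB_sym a b : eqB a b -> eqB b a. Proof. intros h X hX; symmetry; auto. Qed.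
Lemma eqB_trans a b c : eqB a b -> eqB b c -> eqB a c. Proof. intros h1 h2 X hX; rewrite h1; auto. Qed.
Lemma eqB_refl a : eqB a a. Proof. intros X _; auto. Qed.

Lemma act_B g mu X : B X -> act g mu X = mu (Tr g X).
Proof. intro hX. unfold act, normz. destruct (excluded_middle_informative (B X)); [|tauto]. reflexivity. Qed.
Lemma act_nz g mu : nz (act g mu). Proof. apply normz_nz. Qed.

Lemma act_eqB g a b : G g -> eqB a b -> act g a = act g b.
Proof. intros Gg e. apply nz_eq; try apply act_nz. intros X hX. rewrite !act_B; auto. apply e, B_tr; auto. Qed.

Lemma act_comp g h mu : G g -> G h -> act g (act h mu) = act (mul g h) mu.
Proof.
  intros Gg Gh. apply nz_eq; try apply act_nz. intros X hX.
  rewrite !act_B; auto; [|apply B_tr; auto]. rewrite Tr_comp; auto.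
Qed.
Lemma act_one mu : nz mu -> act one mu = mu.
Proof.
  intros h. apply nz_eq; auto; [apply act_nz|]. intros X hX. rewrite act_B; auto. rewrite Tr_one; auto.
Qed.
Lemma act_mix g t a b : G g -> act g (mix t a b) = mix t (act g a) (act g b).
Proof.
  intros Gg. apply functional_extensionality; intro X. unfold mix. destruct (classic (B X)) as [h|h].
  - rewrite !act_B; auto.
  - rewrite !(act_nz g _ X h). ring.
Qed.

Lemma KM_bound mu : KM mu -> forall X, B X -> 0 <= mu X <= 1.
Proof. intros [h _] X hX; apply h; auto. Qed.

Lemma act_KM g mu : G g -> KM mu -> KM (act g mu).
Proof.
  intros Gg [h1 [h2 h3]]. split; [|split].
  - intros X hX. rewrite act_B; auto. apply h1, B_tr; auto.
  - rewrite act_B by apply B_G; auto. rewrite Tr_G; auto.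
  - intros X Y hX hY hXY. rewrite !act_B; auto; [|apply B_or; auto].
    rewrite Tr_or. apply h3; try (apply B_tr; auto). intros a [_ a1] [_ a2]. eapply hXY; eauto.
Qed.

Lemma KM_mix t a b : 0 <= t <= 1 -> KM a -> KM b -> KM (mix t a b).
Proof.
  intros ht [a1 [a2 a3]] [b1 [b2 b3]]. unfold mix. split; [|split].
  - intros X hX. specialize (a1 X hX). specialize (b1 X hX). nra.
  - rewrite a2, b2. ring.
  - intros X Y hX hY hXY. rewrite a3, b3; auto. ring.
Qed.

Lemma closed_imp (P : Prop) (C : Pt -> Prop) : (P -> Cl C) -> Cl (fun f => P -> C f).
Proof.
  intros h. destruct (classic P) as [p|p].
  - apply (closed_ext _ _ _ _ (h p)). intros; tauto.
  - apply (closed_ext _ _ _ _ (closed_true _ B)). intros; tauto.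
Qed.

Lemma cont_B X : B X -> cont B (fun mu : Pt => mu X).
Proof. intro hX. apply cont_coord; auto. Qed.

Lemma KM_closed : Cl KM.
Proof.
  unfold KM, keisler, Cl. apply closed_and; [|apply closed_and].
  - apply closed_all; intro X. apply closed_imp; intro hX.
    apply closed_and; apply closed_le; try apply cont_B; auto; apply cont_const.
  - apply closed_eq; [apply cont_B, B_G| apply cont_const].
  - apply closed_all; intro X. apply closed_all; intro Y.
    apply closed_imp; intro hX. apply closed_imp; intro hY. apply closed_imp; intro hXY.
    apply closed_eq; [apply cont_B, B_or; auto| apply cont_plus; apply cont_B; auto].
Qed.

Lemma Cl_eqB C a b : Cl C -> eqB a b -> C a -> C b.
Proof. intros hC e ca. apply (closed_coords _ _ C a b hC); auto. Qed.

Lemma Cl_act C g : G g -> Cl C -> Cl (fun mu => C (act g mu)).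
Proof.
  intros Gg hC. assert (h := closed_pull B B (Tr g) C (fun X hX => B_tr g X Gg hX) hC).
  apply (closed_ext _ _ _ _ h). intro mu. split; apply Cl_eqB; auto; intros X hX; rewrite act_B; auto.
Qed.

Lemma exists_KM : exists mu, KM mu /\ nz mu.
Proof.
  set (d := fun X : list M -> Prop => if excluded_middle_informative (X one) then 1 else 0).
  exists (normz d). split.
  - split; [|split].
    + intros X hX. rewrite normz_eqB; auto. unfold d. destruct (excluded_middle_informative (X one)); lra.
    + rewrite normz_eqB by apply B_G. unfold d. destruct (excluded_middle_informative (G one)); auto.
      exfalso; apply n. apply Gone.
    + intros X Y hX hY hXY. rewrite !normz_eqB; auto; [|apply B_or; auto]. unfold d.
      destruct (excluded_middle_informative (X one)); destruct (excluded_middle_informative (Y one));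
      destruct (excluded_middle_informative (X one \/ Y one)); try tauto; try lra.
      exfalso; eauto.
  - apply normz_nz.
Qed.

Definition Inv (S : Pt -> Prop) := forall g mu, G g -> S mu -> S (act g mu).
Definition Cvx (S : Pt -> Prop) := forall t a b, 0 <= t <= 1 -> S a -> S b -> S (mix t a b).
Definition total (F : (Pt -> Prop) -> Prop) :=
  forall A1 B1, F A1 -> F B1 -> (forall x, A1 x -> B1 x) \/ (forall x, B1 x -> A1 x).

Lemma chain_point (S0 : Pt -> Prop) (F : (Pt -> Prop) -> Prop) :
  Cl S0 -> (exists x, S0 x) -> (forall x, S0 x -> KM x) ->
  (forall S, F S -> Cl S /\ (exists x, S x) /\ (forall x, S x -> S0 x)) -> total F ->
  exists x, S0 x /\ forall S, F S -> S x.
Proof.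
  intros hS0 [x0 hx0] S0KM hF Ftot.
  destruct (compact_fip _ B (fun C => C = S0 \/ F C)) with (C0 := S0) as [x hx].
  - intros C [->|FC]; auto. apply hF; auto.
  - left; auto.
  - intros f hf X hX. apply KM_bound; auto.
  - intros Cs HCs.
    assert (H : (forall C, In C Cs -> C = S0) \/
                exists S, F S /\ forall C, In C Cs -> C = S0 \/ forall x, S x -> C x).
    { clear -HCs Ftot. induction Cs as [|C Cs IH].
      - left; intros C [].
      - destruct IH as [h|[S [FS h]]]; [intros D hD; apply HCs; right; auto| |].
        + destruct (HCs C (or_introl eq_refl)) as [->|FC].
          * left; intros D [<-|hD]; auto.
          * right; exists C; split; auto. intros D [<-|hD]; [right; auto|left; auto].
        + destruct (HCs C (or_introl eq_refl)) as [->|FC].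
          * right; exists S; split; auto. intros D [<-|hD]; [left; auto|auto].
          * destruct (Ftot S C FS FC) as [sc|cs].
            -- right; exists S; split; auto. intros D [<-|hD]; [right; auto|auto].
            -- right; exists C; split; auto. intros D [<-|hD]; [right; auto|].
               destruct (h D hD) as [e|i]; [left; auto|right; auto]. }
    destruct H as [h|[S [FS h]]].
    + exists x0. intros C hC. rewrite (h C hC); auto.
    + destruct (proj1 (proj2 (hF S FS))) as [x hx]. exists x. intros C hC.
      destruct (h C hC) as [->|i]; auto. apply (proj2 (proj2 (hF S FS))); auto.
  - exists x. split; [apply hx; left; auto|]. intros S FS; apply hx; right; auto.
Qed.

Definition QK (S : Pt -> Prop) := (exists x, S x) /\ Cl S /\ Inv S /\ Cvx S.

Lemma Cl_all (F : (Pt -> Prop) -> Prop) : (forall S, F S -> Cl S) -> Cl (fun x => forall S, F S -> S x).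
Proof. intros h. apply (closed_all _ B _ (fun S f => F S -> S f)); intro S. apply closed_impl; exact (h S). Qed.

Lemma exists_K : exists K, QK K /\ (forall x, K x -> KM x) /\
   forall S, QK S -> (forall x, S x -> K x) -> forall x, K x -> S x.
Proof.
  apply zorn_min.
  - split; [destruct exists_KM as [x [h _]]; eauto|]. split; [apply KM_closed|]. split.
    + intros g mu Gg h; apply act_KM; auto.
    + intros t a b ht; apply KM_mix; auto.
  - intros F hF Ftot. split; [|split; [|split]].
    + destruct (chain_point KM F) as [x [h1 h2]]; auto.
      * apply KM_closed.
      * destruct exists_KM as [x [h _]]; eauto.
      * intros S FS. destruct (hF S FS) as [[a [b _]] c]; auto.
      * eauto.
    + apply closed_and; [apply KM_closed| apply Cl_all]. intros S FS; apply hF; auto.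
    + intros g mu Gg [h1 h2]. split; [apply act_KM; auto|]. intros S FS.
      destruct (hF S FS) as [[_ [_ [hi _]]] _]. apply hi; auto. apply h2; auto.
    + intros t a b ht [a1 a2] [b1 b2]. split; [apply KM_mix; auto|]. intros S FS.
      destruct (hF S FS) as [[_ [_ [_ hc]]] _]. apply hc; auto; [apply a2|apply b2]; auto.
Qed.

Section WithK.
Variable K : Pt -> Prop.
Hypothesis QKK : QK K.
Hypothesis KKM : forall x, K x -> KM x.
Hypothesis Kmin : forall S, QK S -> (forall x, S x -> K x) -> forall x, K x -> S x.

Lemma K_cl : Cl K. Proof. apply QKK. Qed.
Lemma K_inv : Inv K. Proof. apply QKK. Qed.
Lemma K_cvx : Cvx K. Proof. apply QKK. Qed.
Lemma K_ne : exists x, K x. Proof. apply QKK. Qed.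

Definition face (S : Pt -> Prop) := (forall x, S x -> K x) /\
  forall a b t, 0 < t < 1 -> K a -> K b -> S (mix t a b) -> S a /\ S b.
Definition QF (S : Pt -> Prop) := (exists x, S x) /\ Cl S /\ face S.

Lemma sup_attain (F : Pt -> Prop) X : Cl F -> (exists x, F x) -> (forall x, F x -> KM x) -> B X ->
  exists s, (forall p, F p -> p X <= s) /\ exists p, F p /\ s <= p X.
Proof.
  intros hF [x0 hx0] FKM hX.
  destruct (completeness (fun r => exists p, F p /\ r = p X)) as [s [ub lub]].
  - exists 1. intros r [p [Fp ->]]. apply (KM_bound p (FKM p Fp) X hX).
  - exists (x0 X); eauto.
  - exists s. split; [intros p Fp; apply ub; eauto|].
    destruct (compact_fip _ B (fun C => C = F \/ exists d, 0 < d /\ C = (fun p => s - d <= p X))) with (C0 := F)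
      as [p hp].
    + intros C [->|[d [hd ->]]]; auto. apply closed_le; [apply cont_const| apply cont_B; auto].
    + left; auto.
    + intros f hf Y hY. apply KM_bound; auto.
    + intros Cs HCs.
      assert (H : exists d, 0 < d /\ forall C, In C Cs -> C = F \/ forall p, s - d <= p X -> C p).
      { clear -HCs. induction Cs as [|C Cs IH].
        - exists 1; split; [lra|intros C []].
        - destruct IH as [d [hd h]]; [intros D hD; apply HCs; right; auto|].
          destruct (HCs C (or_introl eq_refl)) as [->|[d' [hd' ->]]].
          + exists d; split; auto. intros D [<-|hD]; auto.
          + exists (Rmin d d'). split; [apply Rmin_glb_lt; auto|].
            intros D [<-|hD].
            * right; intros p hp. assert (Rmin d d' <= d') by apply Rmin_r. lra.
            * destruct (h D hD) as [e|i]; [left; auto|right; intros p hp; apply i].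
              assert (Rmin d d' <= d) by apply Rmin_l. lra. }
      destruct H as [d [hd h]].
      assert (ex : exists p, F p /\ s - d < p X).
      { apply NNPP; intro n. assert (s <= s - d); [|lra]. apply lub. intros r [p [Fp ->]].
        destruct (Rle_dec (p X) (s - d)); auto. exfalso; apply n. exists p; split; auto; lra. }
      destruct ex as [p [Fp hp]]. exists p. intros C hC. destruct (h C hC) as [->|i]; auto. apply i; lra.
    + exists p. split; [apply hp; left; auto|].
      apply Rnot_lt_le; intro hlt. assert (h := hp (fun q => s - (s - p X)/2 <= q X)). simpl in h.
      assert (s - (s - p X) / 2 <= p X); [|lra]. apply h. right. exists ((s - p X)/2). split; auto; lra.
Qed.

Lemma minface_single (Fm : Pt -> Prop) : QF Fm -> (forall S, QF S -> (forall x, S x -> Fm x) -> forall x, Fm x -> S x) ->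
  forall u v, Fm u -> Fm v -> eqB u v.
Proof.
  intros [hne [hcl [hsub hface]]] hmin u v Fu Fv X hX.
  destruct (sup_attain Fm X hcl hne) as [s [ub [p [Fp hp]]]]; auto.
  set (F' := fun q => Fm q /\ s <= q X).
  assert (QF F').
  { split; [exists p; split; auto|]. split.
    - apply closed_and; auto. apply closed_le; [apply cont_const| apply cont_B; auto].
    - split; [intros x [h _]; auto|]. intros a b t ht Ka Kb [hm hs].
      destruct (hface a b t ht Ka Kb hm) as [Fa Fb].
      assert (ua := ub a Fa). assert (ubb := ub b Fb). unfold mix in hs.
      split; split; auto; nra. }
  assert (hu := hmin F' H (fun x h => proj1 h) u Fu). assert (hv := hmin F' H (fun x h => proj1 h) v Fv).
  destruct hu as [_ hu]. destruct hv as [_ hv]. assert (u X <= s) by auto. assert (v X <= s) by auto. lra.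
Qed.

Definition Ext (e : Pt) := K e /\ nz e /\
  forall a b t, 0 < t < 1 -> K a -> K b -> eqB (mix t a b) e -> eqB a e /\ eqB b e.

Lemma exists_ext : exists e, Ext e.
Proof.
  destruct (zorn_min _ QF K) as [Fm [QFm [FmK Fmmin]]].
  - split; [apply K_ne|]. split; [apply K_cl|]. split; [auto|]. intros a b t ht Ka Kb _; auto.
  - intros F hF Ftot. split; [|split].
    + destruct (chain_point K F) as [x [h1 h2]]; auto.
      * apply K_cl.
      * apply K_ne.
      * intros S FS. destruct (hF S FS) as [[a [b _]] c]; auto.
      * eauto.
    + apply closed_and; [apply K_cl| apply Cl_all]. intros S FS; apply hF; auto.
    + split; [intros x [h _]; auto|]. intros a b t ht Ka Kb [hK hS]. split; split; auto; intros S FS;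
        destruct (hF S FS) as [[_ [_ [_ fS]]] _]; destruct (fS a b t ht Ka Kb (hS S FS)); auto.
  - destruct QFm as [[e0 he0] [hcl [hsub hface]]].
    assert (Fe : Fm (normz e0)) by (apply (Cl_eqB Fm e0); auto; apply eqB_sym, normz_eqB).
    exists (normz e0). split; [auto|]. split; [apply normz_nz|].
    intros a b t ht Ka Kb hm.
    assert (Fmix : Fm (mix t a b)) by (apply (Cl_eqB Fm (normz e0)); auto; apply eqB_sym; auto).
    destruct (hface a b t ht Ka Kb Fmix) as [Fa Fb].
    assert (QF Fm) by (split; [exists e0; auto|split; [auto|split; auto]]).
    split; apply (minface_single Fm); auto.
Qed.


Definition nbc {J : Type} (js : list J) (d : R) (f g : J -> R) : Prop :=
  forall j, In j js -> Rabs (g j - f j) <= d.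

Lemma le_all_eq (a b : R) : (forall d, 0 < d -> Rabs (a - b) <= d) -> a = b.
Proof.
  intro h. destruct (Req_dec a b) as [|ne]; auto. exfalso.
  assert (hp : 0 < Rabs (a - b)) by (apply Rabs_pos_lt; lra).
  specialize (h (Rabs (a - b) / 2) ltac:(lra)). lra.
Qed.

Definition Wset (n : nat) (zz : nat -> Pt) (Xs : list (list M -> Prop)) (r : R) (p : Pt) : Prop :=
  exists (lam : nat -> R) (ks : nat -> Pt), (forall i, (i < n)%nat -> 0 <= lam i) /\ rsum n lam = 1 /\
    (forall i, (i < n)%nat -> K (ks i) /\ nbc Xs r (zz i) (ks i)) /\
    eqB p (fun X => rsum n (fun i => lam i * ks i X)).

Definition J' := (nat * option (list M -> Prop))%type.

Lemma W_closed n zz Xs r : (forall X, In X Xs -> B X) -> Cl (Wset n zz Xs r).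
Proof.
  intros hXs.
  apply (closed_ext _ _ _ _ (clo_closed _ B (Wset n zz Xs r))). intro p; split; [|apply clo_incl].
  intro cp.
  set (A' := fun j : J' => (fst j < n)%nat /\ match snd j with None => True | Some X => B X end).
  set (Valid := fun f : J' -> R => (forall i, (i < n)%nat -> 0 <= f (i, None)) /\ rsum n (fun i => f (i, None)) = 1 /\
     forall i, (i < n)%nat -> K (fun X => f (i, Some X)) /\ nbc Xs r (zz i) (fun X => f (i, Some X))).
  set (Nn := fun X d (f : J' -> R) => Rabs (rsum n (fun i => f (i, None) * f (i, Some X)) - p X) <= d).
  destruct (compact_fip J' A' (fun C => C = Valid \/ exists X d, B X /\ 0 < d /\ C = Nn X d)) with (C0 := Valid)
    as [phi hphi].
  - intros C [->|[X [d [hX [hd ->]]]]].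
    + apply closed_and; [|apply closed_and].
      * apply (closed_all _ A' _ (fun i f => (i < n)%nat -> 0 <= f (i, None))). intro i.
        apply closed_impl; intro hi. apply closed_le; [apply cont_const| apply cont_coord; split; simpl; auto].
      * apply closed_eq; [|apply cont_const]. apply cont_rsum. intros i hi. apply cont_coord; split; simpl; auto.
      * apply (closed_all _ A' _ (fun i f => (i < n)%nat -> K (fun X => f (i, Some X)) /\ nbc Xs r (zz i) (fun X => f (i, Some X)))).
        intro i. apply closed_impl; intro hi. apply closed_and.
        -- apply (closed_pull B A' (fun X => (i, Some X)) K); [intros X hX; split; simpl; auto| apply K_cl].
        -- apply (closed_all _ A' _ (fun X f => In X Xs -> Rabs (f (i, Some X) - zz i X) <= r)). intro X.
           apply closed_impl; intro hX. apply closed_le; [|apply cont_const].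
           apply cont_abs, cont_minus; [apply cont_coord; split; simpl; auto| apply cont_const].
    + apply closed_le; [|apply cont_const]. apply cont_abs, cont_minus; [|apply cont_const].
      apply cont_rsum. intros i hi. apply cont_mult; apply cont_coord; split; simpl; auto.
  - left; auto.
  - intros f [v1 [v2 v3]] [i [X|]] [hi hX]; simpl in hi, hX.
    + destruct (v3 i hi) as [Kk _]. apply (KM_bound _ (KKM _ Kk) X hX).
    + split; [auto|]. rewrite <- v2. apply (rsum_le_elem n (fun i => f (i, None)) i); auto.
  - intros Cs HCs.
    assert (H : exists Ys d, 0 < d /\ (forall X, In X Ys -> B X) /\
       forall C, In C Cs -> C = Valid \/ exists X d', In X Ys /\ d <= d' /\ C = Nn X d').
    { clear -HCs. induction Cs as [|C Cs IH].
      - exists nil, 1. split; [lra|]. split; [intros _ []|intros _ []].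
      - destruct IH as [Ys [d [hd [hY h]]]]; [intros D hD; apply HCs; right; auto|].
        destruct (HCs C (or_introl eq_refl)) as [->|[X [d' [hX [hd' ->]]]]].
        + exists Ys, d. split; auto. split; auto. intros D [<-|hD]; auto.
        + exists (X :: Ys), (Rmin d d'). split; [apply Rmin_glb_lt; auto|]. split.
          * intros Y [<-|hy]; auto.
          * intros D [<-|hD].
            -- right. exists X, d'. split; [left; auto|]. split; auto. apply Rmin_r.
            -- destruct (h D hD) as [e|[Y [d'' [hy [hle ->]]]]]; [left; auto|].
               right. exists Y, d''. split; [right; auto|]. split; auto.
               eapply Rle_trans; [apply Rmin_l|auto]. }
    destruct H as [Ys [d [hd [hY h]]]].
    destruct (cp Ys d hY hd) as [w [[lam [ks [l1 [l2 [l3 l4]]]]] nw]].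
    exists (fun j : J' => match snd j with None => lam (fst j) | Some X => ks (fst j) X end).
    intros C hC. destruct (h C hC) as [->|[X [d' [hX [hle ->]]]]].
    + split; [simpl; auto|]. split; [simpl; auto|]. simpl. intros i hi. destruct (l3 i hi) as [a b].
      split; auto.
    + unfold Nn. simpl. rewrite <- (l4 X (hY X hX)). specialize (nw X hX). lra.
  - destruct (hphi Valid (or_introl eq_refl)) as [v1 [v2 v3]].
    exists (fun i => phi (i, None)), (fun i X => phi (i, Some X)). split; auto. split; auto. split; auto.
    intros X hX. apply le_all_eq. intros d hd.
    rewrite Rabs_minus_sym. apply (hphi (Nn X d)). right. exists X, d. auto.
Qed.

Lemma W_cvx n zz Xs r : Cvx (Wset n zz Xs r).
Proof.
  intros t a b ht [l1 [k1 [a1 [a2 [a3 a4]]]]] [l2 [k2 [b1 [b2 [b3 b4]]]]].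
  set (lam := fun i => t * l1 i + (1 - t) * l2 i).
  set (ks := fun i => match Rlt_dec 0 (lam i) with left _ => mix (t * l1 i / lam i) (k1 i) (k2 i) | right _ => k1 i end).
  exists lam, ks. split; [|split; [|split]].
  - intros i hi. unfold lam. specialize (a1 i hi). specialize (b1 i hi). nra.
  - unfold lam. rewrite rsum_plus, !rsum_scal, a2, b2. ring.
  - intros i hi. unfold ks. destruct (a3 i hi) as [ka na]. destruct (b3 i hi) as [kb nb'].
    destruct (Rlt_dec 0 (lam i)) as [pos|_]; [|split; auto].
    assert (hc : 0 <= t * l1 i / lam i <= 1).
    { specialize (a1 i hi). specialize (b1 i hi). unfold lam in *. split.
      - unfold Rdiv. apply Rmult_le_pos; [nra| left; apply Rinv_0_lt_compat; auto].
      - apply Rmult_le_reg_r with (t * l1 i + (1 - t) * l2 i); auto. unfold Rdiv.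
        rewrite Rmult_assoc, Rinv_l by lra. nra. }
    split; [apply K_cvx; auto|].
    intros X hX. specialize (na X hX). specialize (nb' X hX). unfold mix.
    set (c := t * l1 i / lam i) in *.
    replace (c * k1 i X + (1 - c) * k2 i X - zz i X) with (c * (k1 i X - zz i X) + (1 - c) * (k2 i X - zz i X)) by ring.
    eapply Rle_trans; [apply Rabs_triang|]. rewrite !Rabs_mult, (Rabs_pos_eq c), (Rabs_pos_eq (1 - c)) by lra. nra.
  - intros X hX. unfold mix. rewrite a4, b4 by auto.
    rewrite <- !rsum_scal, <- rsum_plus. apply rsum_ext. intros i hi. unfold ks.
    specialize (a1 i hi). specialize (b1 i hi).
    destruct (Rlt_dec 0 (lam i)) as [pos|npos].
    + unfold mix, lam in *. field. lra.
    + assert (lam i = 0) by (unfold lam in *; nra). unfold lam in H.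
      assert (z1 : t * l1 i = 0) by nra. assert (z2 : (1 - t) * l2 i = 0) by nra.
      unfold lam. replace (t * (l1 i * k1 i X) + (1 - t) * (l2 i * k2 i X)) with
        ((t * l1 i) * k1 i X + ((1-t) * l2 i) * k2 i X) by ring. rewrite z1, z2. ring.
Qed.

Section WithE.
Variable e : Pt.
Hypothesis He : Ext e.

Lemma decomp n : forall (lam : nat -> R) (ks : nat -> Pt), (forall i, (i < n)%nat -> 0 <= lam i) -> rsum n lam = 1 ->
  (forall i, (i < n)%nat -> K (ks i)) ->
  (exists q, K q /\ eqB q (fun X => rsum n (fun i => lam i * ks i X))) /\
  (eqB e (fun X => rsum n (fun i => lam i * ks i X)) -> exists i, (i < n)%nat /\ eqB (ks i) e).
Proof.
  induction n; intros lam ks hl hs hk; simpl in hs; [lra|].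
  assert (hr : 0 <= rsum n lam) by (apply rsum_nonneg; intros; apply hl; lia).
  assert (hn : 0 <= lam n) by (apply hl; lia).
  destruct (Rle_lt_or_eq_dec _ _ hr) as [rpos|rz].
  - set (r := rsum n lam) in *.
    set (lam' := fun i => / r * lam i).
    destruct (IHn lam' ks) as [[q' [Kq' eq']] ext'].
    + intros i hi. unfold lam'. apply Rmult_le_pos; [apply Rlt_le, Rinv_0_lt_compat; auto| apply hl; lia].
    + unfold lam'. rewrite rsum_scal. fold r. field. lra.
    + intros; apply hk; lia.
    + assert (E : forall X, B X -> rsum n (fun i => lam i * ks i X) + lam n * ks n X = (mix r q' (ks n)) X).
      { intros X hX. unfold mix. rewrite eq' by auto. unfold lam'.
        replace (1 - r) with (lam n) by lra.
        rewrite <- rsum_scal. f_equal. apply rsum_ext. intros i hi. field. lra. }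
      split.
      * exists (mix r q' (ks n)). split; [apply K_cvx; auto; lra|]. intros X hX. simpl. rewrite E; auto.
      * intro he. destruct (Rle_lt_or_eq_dec _ _ hn) as [npos|nz0].
        -- exists n. split; [lia|]. destruct He as [_ [_ hext]].
           refine (proj2 (hext q' (ks n) r _ Kq' (hk n _) _)); [lra|lia|].
           intros X hX. rewrite he by auto. simpl. rewrite E; auto.
        -- destruct ext' as [i [hi hki]].
           ++ intros X hX. rewrite he by auto. simpl. rewrite <- nz0. unfold lam'.
              assert (r1 : r = 1) by lra. rewrite Rmult_0_l, Rplus_0_r. apply rsum_ext.
              intros i hi. rewrite r1. field.
           ++ exists i. split; [lia|auto].
  - assert (l1 : lam n = 1) by lra.
    assert (z : forall i, (i < n)%nat -> lam i = 0).
    { intros i hi. assert (lam i <= rsum n lam) by (apply rsum_le_elem; auto; intros; apply hl; lia).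
      assert (0 <= lam i) by (apply hl; lia). lra. }
    assert (E : forall X, rsum n (fun i => lam i * ks i X) + lam n * ks n X = ks n X).
    { intro X. rewrite rsum_zero; [rewrite l1; ring|]. intros i hi. rewrite z; auto; ring. }
    split.
    + exists (ks n). split; [apply hk; lia|]. intros X hX. simpl. rewrite E; auto.
    + intro he. exists n. split; [lia|]. intros X hX. rewrite he by auto. simpl. rewrite E; auto.
Qed.


Lemma milman m : K m -> forall Xs eps, (forall X, In X Xs -> B X) -> 0 < eps ->
  exists g, G g /\ nb Xs eps e (act g m).
Proof.
  intros Km Xs eps hXs heps. apply NNPP; intro H0.
  assert (H0' : forall g, G g -> ~ nb Xs eps e (act g m)) by (intros g Gg hn; apply H0; eauto).
  clear H0.
  set (Orb := fun q => exists g, G g /\ q = act g m).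
  set (Z := fun p => KM p /\ clo _ B Orb p).
  assert (Zcl : Cl Z) by (apply closed_and; [apply KM_closed| apply clo_closed]).
  assert (ZK : forall p, Z p -> K p).
  { intros p [_ cp]. apply (clo_min _ B Orb K p K_cl); auto. intros q [g [Gg ->]]. apply K_inv; auto. }
  assert (Zinv : Inv Z).
  { intros h p Gh [KMp cp]. split; [apply act_KM; auto|].
    intros js d hjs hd.
    destruct (cp (map (Tr h) js) d) as [q [[g [Gg ->]] nq]]; auto.
    { intros Y hY. apply in_map_iff in hY. destruct hY as [X [<- hX]]. apply B_tr; auto. }
    exists (act h (act g m)). split.
    - exists (mul h g). split; [apply Gmul; auto| apply act_comp; auto].
    - intros X hX. rewrite (act_B h (act g m) X), (act_B h p X) by auto. apply (nq (Tr h X)). apply in_map; auto. }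
  assert (Zm : Z m).
  { split; [apply KKM; auto|]. intros js d hjs hd. exists (act one m). split; [exists one; split; auto; apply Gone|].
    intros X hX. rewrite act_B by auto. rewrite Tr_one by auto. rewrite Rminus_diag, Rabs_R0; auto. }
  assert (Zfar : forall p, Z p -> ~ nb Xs eps e p).
  { intros p [_ cp] hn. destruct (nb_open _ _ _ _ _ hn) as [d [hd hd']].
    destruct (cp Xs d hXs hd) as [q [[g [Gg ->]] nq]]. apply (H0' g Gg). apply hd'; auto. }
  assert (HK : forall p, K p -> forall C, Cl C -> Cvx C -> (forall z, Z z -> C z) -> C p).
  { set (H := fun p => K p /\ forall C, Cl C -> Cvx C -> (forall z, Z z -> C z) -> C p).
    assert (QH : QK H).
    { split; [exists m; split; auto; intros C _ _ hC; apply hC; auto|]. split; [|split].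
      - apply closed_and; [apply K_cl|].
        apply (closed_all _ B _ (fun C f => Cl C -> Cvx C -> (forall z, Z z -> C z) -> C f)). intro C.
        apply closed_impl; intro hC. apply closed_impl; intro hC'. apply closed_impl; intro hC''. exact hC.
      - intros g p Gg [Kp hp]. split; [apply K_inv; auto|]. intros C hC hcv hZ.
        apply (hp (fun q => C (act g q))).
        + apply Cl_act; auto.
        + intros t a b ht ha hb. rewrite act_mix by auto. apply hcv; auto.
        + intros z hz. apply hZ, Zinv; auto.
      - intros t a b ht [Ka ha] [Kb hb]. split; [apply K_cvx; auto|]. intros C hC hcv hZ. apply hcv; auto; [apply ha|apply hb]; auto. }
    intros p Kp. apply (Kmin H QH (fun x h => proj1 h) p Kp). }
  assert (cover : exists L, (forall z, In z L -> Z z) /\ forall p, Z p -> exists z, In z L /\ nb Xs (eps/3) z p).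
  { apply NNPP; intro nc.
    destruct (compact_fip _ B (fun C => C = Z \/ exists z, Z z /\ C = (fun p => Z p /\ ~ nb Xs (eps/3) z p)))
      with (C0 := Z) as [p hp].
    - intros C [->|[z [hz ->]]]; auto. apply closed_and; auto. apply closed_not_open, popen_nb; auto.
    - left; auto.
    - intros f [hf _] X hX. apply KM_bound; auto.
    - intros Cs HCs.
      assert (H : exists L, (forall z, In z L -> Z z) /\ forall C, In C Cs -> C = Z \/
                   exists z, In z L /\ C = (fun p => Z p /\ ~ nb Xs (eps/3) z p)).
      { clear -HCs. induction Cs as [|C Cs IH].
        - exists nil. split; intros _ [].
        - destruct IH as [L [hL h]]; [intros D hD; apply HCs; right; auto|].
          destruct (HCs C (or_introl eq_refl)) as [->|[z [hz ->]]].
          + exists L. split; auto. intros D [<-|hD]; auto.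
          + exists (z :: L). split; [intros y [<-|hy]; auto|]. intros D [<-|hD].
            * right. exists z. split; [left|]; auto.
            * destruct (h D hD) as [E|[y [hy ->]]]; [left; auto|right; exists y; split; [right|]; auto]. }
      destruct H as [L [hL h]].
      assert (ex : exists p, Z p /\ forall z, In z L -> ~ nb Xs (eps/3) z p).
      { apply NNPP; intro n. apply nc. exists L. split; auto. intros p Zp. apply NNPP; intro n2.
        apply n. exists p. split; auto. intros z hz hn. apply n2. exists z; auto. }
      destruct ex as [p [Zp hp]]. exists p. intros C hC. destruct (h C hC) as [->|[z [hz ->]]]; auto.
    - assert (Zp : Z p) by (apply hp; left; auto).
      destruct (hp (fun q => Z q /\ ~ nb Xs (eps/3) p q)) as [_ nn]; [right; exists p; auto|].
      apply nn, nb_refl. lra. }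
  destruct cover as [L [hL hcov]].
  set (n := length L). set (zz := fun i => nth i L e).
  assert (Wcl := W_closed n zz Xs (eps/3) hXs).
  assert (Wcv := W_cvx n zz Xs (eps/3)).
  assert (ZW : forall p, Z p -> Wset n zz Xs (eps/3) p).
  { intros p Zp. destruct (hcov p Zp) as [z [hz nz]].
    destruct (In_nth L z e hz) as [i0 [hi0 hzi]].
    exists (fun i => if Nat.eqb i i0 then 1 else 0), (fun i => if Nat.eqb i i0 then p else zz i).
    split; [|split; [|split]].
    - intros i hi. destruct (Nat.eqb i i0); lra.
    - exact (rsum_delta n i0 (fun _ => 1) hi0).
    - intros i hi. destruct (Nat.eqb_spec i i0) as [->|ne].
      + split; [apply ZK; auto|]. unfold zz. rewrite hzi. intros X hX. left. apply nz; auto.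
      + assert (Zi : Z (zz i)) by (apply hL, nth_In; auto). split; [apply ZK; auto|].
        intros X hX. rewrite Rminus_diag, Rabs_R0. lra.
    - intros X hX. rewrite (rsum_ext _ _ (fun i => if Nat.eqb i i0 then (fun _ => p X) i else 0)).
      + symmetry. exact (rsum_delta n i0 (fun _ => p X) hi0).
      + intros i hi. destruct (Nat.eqb i i0); ring. }
  destruct He as [Ke [nze hext]].
  destruct (HK e Ke _ Wcl Wcv ZW) as [lam [ks [l1 [l2 [l3 l4]]]]].
  destruct (decomp n lam ks l1 l2 (fun i hi => proj1 (l3 i hi))) as [_ hd].
  destruct (hd l4) as [i [hi hki]].
  assert (Zi : Z (zz i)) by (apply hL, nth_In; auto).
  apply (Zfar (zz i) Zi). intros X hX. destruct (l3 i hi) as [_ nc]. specialize (nc X hX).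
  rewrite hki in nc by auto. rewrite Rabs_minus_sym. lra.
Qed.

Definition J2 := (bool * (list M -> Prop))%type.
Definition A2 (j : J2) : Prop := B (snd j).
Definition enc (a b : Pt) : J2 -> R := fun j => if fst j then a (snd j) else b (snd j).

Lemma prox x y : K x -> K y -> forall Xs eps, (forall X, In X Xs -> B X) -> 0 < eps ->
  exists g, G g /\ nb Xs eps e (act g x) /\ nb Xs eps e (act g y).
Proof.
  intros Kx Ky Xs eps hXs heps.
  set (O := fun Ys d (P : J2 -> R) => exists g, G g /\ P = enc (act g x) (act g y) /\
                 nb Ys d e (mix (1/2) (act g x) (act g y))).
  set (box2 := fun P : J2 -> R => forall j, A2 j -> 0 <= P j <= 1).
  destruct (compact_fip J2 A2 (fun C => C = box2 \/ exists Ys d, (forall X, In X Ys -> B X) /\ 0 < d /\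
                C = clo J2 A2 (O Ys d))) with (C0 := box2) as [P hP].
  - intros C [->|[Ys [d [hY [hd ->]]]]]; [|apply clo_closed].
    apply (closed_all _ A2 _ (fun j f => A2 j -> 0 <= f j <= 1)). intro j. apply closed_impl; intro hj.
    apply closed_and; apply closed_le; try apply cont_const; apply cont_coord; auto.
  - left; auto.
  - intros f hf; exact hf.
  - intros Cs HCs.
    assert (H : exists Ys d, 0 < d /\ (forall X, In X Ys -> B X) /\ forall C, In C Cs -> C = box2 \/
        exists Ys' d', (forall X, In X Ys' -> In X Ys) /\ d <= d' /\ C = clo J2 A2 (O Ys' d')).
    { clear -HCs. induction Cs as [|C Cs IH].
      - exists nil, 1. split; [lra|]. split; intros _ [].
      - destruct IH as [Ys [d [hd [hY h]]]]; [intros D hD; apply HCs; right; auto|].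
        destruct (HCs C (or_introl eq_refl)) as [->|[Ys' [d' [hY' [hd' ->]]]]].
        + exists Ys, d. split; auto. split; auto. intros D [<-|hD]; auto.
        + exists (Ys' ++ Ys), (Rmin d d'). split; [apply Rmin_glb_lt; auto|]. split.
          * intros X hX. apply in_app_or in hX. destruct hX; auto.
          * intros D [<-|hD].
            -- right. exists Ys', d'. split; [intros; apply in_or_app; auto|]. split; auto. apply Rmin_r.
            -- destruct (h D hD) as [E|[Z [d'' [hz [hle ->]]]]]; [left; auto|].
               right. exists Z, d''. split; [intros; apply in_or_app; auto|]. split; auto.
               eapply Rle_trans; [apply Rmin_l|auto]. }
    destruct H as [Ys [d [hd [hY h]]]].
    assert (Km : K (mix (1/2) x y)) by (apply K_cvx; auto; lra).
    destruct (milman _ Km Ys d hY hd) as [g [Gg ng]]. rewrite act_mix in ng by auto.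
    exists (enc (act g x) (act g y)). intros C hC. destruct (h C hC) as [->|[Ys' [d' [hY' [hle ->]]]]].
    + intros [[] X] hX; unfold A2 in hX; simpl in *; apply KM_bound; auto; apply act_KM; auto.
    + apply clo_incl. exists g. split; auto. split; auto. intros X hX. specialize (ng X (hY' X hX)). lra.
  - set (a := fun X => P (true, X)). set (b := fun X => P (false, X)).
    assert (cP : clo J2 A2 (O nil 1) P) by (apply hP; right; exists nil, 1; split; [intros _ []|]; split; auto; lra).
    assert (Ka : K a).
    { apply (clo_min _ B K K a K_cl); auto. intros js d hjs hd.
      destruct (cP (map (pair true) js) d) as [Q [[g [Gg [-> _]]] nq]].
      { intros j hj. apply in_map_iff in hj. destruct hj as [X [<- hX]]. apply hjs; auto. }
      { auto. }
      exists (act g x). split; [apply K_inv; auto|]. intros X hX. apply (nq (true, X)). apply in_map; auto. }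
    assert (Kb : K b).
    { apply (clo_min _ B K K b K_cl); auto. intros js d hjs hd.
      destruct (cP (map (pair false) js) d) as [Q [[g [Gg [-> _]]] nq]].
      { intros j hj. apply in_map_iff in hj. destruct hj as [X [<- hX]]. apply hjs; auto. }
      { auto. }
      exists (act g y). split; [apply K_inv; auto|]. intros X hX. apply (nq (false, X)). apply in_map; auto. }
    assert (me : eqB (mix (1/2) a b) e).
    { intros X hX. apply le_all_eq. intros d hd.
      assert (cX : clo J2 A2 (O [X] (d/2)) P) by (apply hP; right; exists [X], (d/2); split;
        [intros Y [<-|[]]; auto|]; split; auto; lra).
      destruct (cX [(true, X); (false, X)] (d/2)) as [Q [[g [Gg [-> ng]]] nq]].
      { intros j [<-|[<-|[]]]; unfold A2; simpl; auto. }
      { lra. }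
      specialize (ng X (or_introl eq_refl)). assert (q1 := nq (true, X) (or_introl eq_refl)).
      assert (q2 := nq (false, X) (or_intror (or_introl eq_refl))). simpl in q1, q2.
      unfold mix in *. unfold a, b. unfold enc in q1, q2. simpl in q1, q2.
      apply Rabs_def2 in ng. apply Rabs_def2 in q1. apply Rabs_def2 in q2.
      apply Rabs_le. lra. }
    destruct He as [_ [_ hext]].
    destruct (hext a b (1/2) ltac:(lra) Ka Kb me) as [ae be].
    destruct (cP (map (pair true) Xs ++ map (pair false) Xs) eps) as [Q [[g [Gg [-> _]]] nq]].
    { intros j hj. apply in_app_or in hj. destruct hj as [hj|hj]; apply in_map_iff in hj;
        destruct hj as [X [<- hX]]; apply hXs; auto. }
    { auto. }
    exists g. split; auto. split; intros X hX.
    + rewrite <- (ae X (hXs X hX)). apply (nq (true, X)). apply in_or_app; left; apply in_map; auto.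
    + rewrite <- (be X (hXs X hX)). apply (nq (false, X)). apply in_or_app; right; apply in_map; auto.
Qed.

End WithE.
End WithK.

Lemma sig_eq_val {T : Type} (P : T -> Prop) (p q : {x : T | P x}) : proj1_sig p = proj1_sig q -> p = q.
Proof. destruct p as [a ha], q as [b hb]; simpl. intros ->. f_equal. apply proof_irrelevance. Qed.

Lemma pos_inv (n : nat) : 0 < / (INR n + 1).
Proof. apply Rinv_0_lt_compat. assert (0 <= INR n) by apply pos_INR. lra. Qed.

Lemma small_inv eps : 0 < eps -> exists n : nat, / (INR n + 1) < eps.
Proof.
  intros he. destruct (archimed (/ eps)) as [h1 _].
  assert (0 <= IZR (up (/ eps))) by (assert (0 < / eps) by (apply Rinv_0_lt_compat; auto); lra).
  exists (Z.to_nat (up (/ eps))). rewrite INR_IZR_INZ, Z2Nat.id by (apply le_IZR; auto).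
  assert (0 < / eps) by (apply Rinv_0_lt_compat; auto).
  apply Rlt_le_trans with (/ (/ eps)).
  - apply Rinv_lt_contravar; [apply Rmult_lt_0_compat; lra| lra].
  - rewrite Rinv_inv. lra.
Qed.

Lemma inv_mono (n m : nat) : (n <= m)%nat -> / (INR m + 1) <= / (INR n + 1).
Proof.
  intro h. apply Rinv_le_contravar; [assert (0 <= INR n) by apply pos_INR; lra|].
  apply le_INR in h. lra.
Qed.

Theorem amenable_main : measure_flow_definable k G mul -> def_strongly_amenable k G mul one -> def_amenable k G mul.
Proof.
  intros Hflow Hsa.
  destruct exists_K as [K [QKK [KKM Kmin]]].
  destruct (exists_ext K QKK KKM) as [e He].
  set (QY := fun S : Pt -> Prop => (exists x, S x) /\ Cl S /\ Inv S).
  destruct (zorn_min _ QY K) as [Y [[[y0 Yy0] [Ycl Yinv]] [YK Ymin]]].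
  { split; [apply K_ne; auto|]. split; [apply K_cl; auto| apply K_inv; auto]. }
  { intros F hF Ftot. split; [|split].
    - destruct (chain_point K F) as [x [h1 h2]]; auto.
      + apply K_cl; auto.
      + apply K_ne; auto.
      + intros S FS. destruct (hF S FS) as [[a [b _]] c]; auto.
      + eauto.
    - apply closed_and; [apply K_cl; auto| apply Cl_all]. intros S FS; apply hF; auto.
    - intros g mu Gg [hK hS]. split; [apply K_inv; auto|]. intros S FS.
      destruct (hF S FS) as [[_ [_ hi]] _]. apply hi; auto. apply hS; auto. }
  assert (YKM : forall x, Y x -> KM x) by (intros x hx; apply KKM, YK; auto).
  assert (Ye : Y e).
  { apply (clo_min _ B (fun q => exists g, G g /\ q = act g y0) Y e Ycl).
    - intros q [g [Gg ->]]. apply Yinv; auto.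
    - intros js d hjs hd. destruct (prox K QKK KKM Kmin e He y0 y0 (YK _ Yy0) (YK _ Yy0) js d hjs hd)
        as [g [Gg [n1 _]]].
      exists (act g y0). split; [exists g; auto|]. exact n1. }
  destruct He as [Ke [nze hext]].
  set (X := {mu : Pt | Y mu /\ nz mu}).
  assert (Ynorm : forall f, Y f -> Y (normz f) /\ nz (normz f)).
  { intros f hf. split; [apply (Cl_eqB Y f); auto; apply eqB_sym, normz_eqB| apply normz_nz]. }
  assert (hact : forall g (p : X), G g -> Y (act g (proj1_sig p)) /\ nz (act g (proj1_sig p))).
  { intros g [p [Yp np]] Gg. simpl. split; [apply Yinv; auto| apply act_nz]. }
  set (act' := fun g (p : X) => match excluded_middle_informative (G g) with
     | left Gg => exist (fun mu => Y mu /\ nz mu) (act g (proj1_sig p)) (hact g p Gg) | right _ => p end).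
  assert (act'_val : forall g p, G g -> proj1_sig (act' g p) = act g (proj1_sig p)).
  { intros g p Gg. unfold act'. destruct (excluded_middle_informative (G g)); [auto|contradiction]. }
  set (isop := fun U : X -> Prop => forall p, U p -> exists Xs eps, 0 < eps /\ (forall X, In X Xs -> B X) /\
      forall q, nb Xs eps (proj1_sig p) (proj1_sig q) -> U q).
  assert (o1 : isop (fun _ => True)).
  { intros p _. exists nil, 1. split; [lra|]. split; [intros _ []|auto]. }
  assert (o2 : forall U V, isop U -> isop V -> isop (fun x => U x /\ V x)).
  { intros U V hU hV p [Up Vp]. destruct (hU p Up) as [Xs1 [d1 [hd1 [hX1 h1]]]].
    destruct (hV p Vp) as [Xs2 [d2 [hd2 [hX2 h2]]]].
    exists (Xs1 ++ Xs2), (Rmin d1 d2). split; [apply Rmin_glb_lt; auto|]. split.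
    - intros Z hZ. apply in_app_or in hZ. destruct hZ; auto.
    - intros q hq. split; [apply h1|apply h2]; intros Z hZ.
      + eapply Rlt_le_trans; [apply hq, in_or_app; auto| apply Rmin_l].
      + eapply Rlt_le_trans; [apply hq, in_or_app; auto| apply Rmin_r]. }
  assert (o3 : forall F : (X -> Prop) -> Prop, (forall U, F U -> isop U) -> isop (fun x => exists U, F U /\ U x)).
  { intros F hF p [U [FU Up]]. destruct (hF U FU p Up) as [Xs [d [hd [hX h]]]].
    exists Xs, d. split; auto. split; auto. intros q hq. exists U. split; auto. }
  set (T := @Build_topology X isop o1 o2 o3).
  assert (open_nb : forall Xs d f, (forall X, In X Xs -> B X) -> isop (fun q : X => nb Xs d f (proj1_sig q))).
  { intros Xs d f hXs p hp. destruct (nb_open _ _ _ _ _ hp) as [d' [hd' h]]. exists Xs, d'. auto. }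
  assert (lift : forall C : X -> Prop, is_closed T C ->
     Cl (fun f => Y f /\ forall h : Y (normz f) /\ nz (normz f), C (exist _ (normz f) h))).
  { intros C hC f nf. destruct (classic (Y f)) as [Yf|nYf].
    - assert (ex : exists h, ~ C (exist (fun mu => Y mu /\ nz mu) (normz f) h)).
      { apply NNPP; intro n. apply nf. split; auto. intro h. apply NNPP; intro n2. apply n; eauto. }
      destruct ex as [h nC]. destruct (hC _ nC) as [Xs [d [hd [hXs hh]]]].
      exists Xs, d. split; auto. split; auto. intros g hg [Yg Cg].
      apply (hh (exist _ (normz g) (Ynorm g Yg))); [|apply Cg].
      intros Z hZ. simpl. rewrite !normz_eqB by auto. apply hg; auto.
    - destruct (Ycl f nYf) as [Xs [d [hd [hXs hh]]]]. exists Xs, d. split; auto. split; auto.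
      intros g hg [Yg _]. apply (hh g hg Yg). }
  assert (Xall : forall p q : X, p = q).
  { apply (Hsa X T act').
    -
      split; [exists (exist _ e (conj Ye nze)); auto|]. split; [|split; [|split; [|split]]].
      +
        intros F hF hcov. apply NNPP; intro nc.
        set (CU := fun U : X -> Prop => fun f => Y f /\ forall h : Y (normz f) /\ nz (normz f),
                       ~ U (exist (fun mu => Y mu /\ nz mu) (normz f) h)).
        destruct (compact_fip _ B (fun C => C = Y \/ exists U, F U /\ C = CU U)) with (C0 := Y) as [f hf].
        * intros C [->|[U [FU ->]]]; auto. apply (lift (fun x => ~ U x)). unfold is_closed. simpl.
          intros p hp. apply NNPP in hp. destruct (hF U FU p hp) as [Xs [d [hd [hX h]]]].
          exists Xs, d. split; [auto|split; [auto|]]. intros q hq nq. apply nq, h; auto.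
        * left; auto.
        * intros f hf Z hZ. apply KM_bound; auto.
        * intros Cs HCs.
          assert (H : exists Us, (forall U, In U Us -> F U) /\ forall C, In C Cs -> C = Y \/ exists U, In U Us /\ C = CU U).
          { clear -HCs. induction Cs as [|C Cs IH].
            - exists nil. split; intros _ [].
            - destruct IH as [Us [hU h]]; [intros D hD; apply HCs; right; auto|].
              destruct (HCs C (or_introl eq_refl)) as [->|[U [FU ->]]].
              + exists Us. split; auto. intros D [<-|hD]; auto.
              + exists (U :: Us). split; [intros V [<-|hV]; auto|]. intros D [<-|hD].
                * right. exists U. split; [left|]; auto.
                * destruct (h D hD) as [E|[V [hV ->]]]; [left; auto|right; exists V; split; [right|]; auto]. }
          destruct H as [Us [hU h]].
          assert (ex : exists p : X, forall U, In U Us -> ~ U p).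
          { apply NNPP; intro n. apply nc. exists Us. split; auto. intro x. apply NNPP; intro n2.
            apply n. exists x. intros U hU' Ux. apply n2. exists U; auto. }
          destruct ex as [[p [Yp np]] hp]. exists p. intros C hC. destruct (h C hC) as [->|[U [hUU ->]]]; auto.
          split; auto. intro hh. assert (E : exist (fun mu => Y mu /\ nz mu) (normz p) hh =
                                              exist (fun mu => Y mu /\ nz mu) p (conj Yp np)).
          { apply sig_eq_val. simpl. apply nz_eq; auto; [apply normz_nz| apply normz_eqB]. }
          rewrite E. apply hp; auto.
        * assert (Yf : Y f) by (apply hf; left; auto).
          destruct (hcov (exist _ (normz f) (Ynorm f Yf))) as [U [FU Up]].
          destruct (hf (CU U)) as [_ nn]; [right; exists U; auto|]. apply (nn _ Up).
      +
        intros p q ne.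
        assert (ex : exists Z, B Z /\ proj1_sig p Z <> proj1_sig q Z).
        { apply NNPP; intro n. apply ne. apply sig_eq_val. destruct p as [p [Yp np]], q as [q [Yq nq]]. simpl in *.
          apply nz_eq; auto. intros Z hZ. apply NNPP; intro n2. apply n. eauto. }
        destruct ex as [Z [hZ nZ]].
        set (d := Rabs (proj1_sig p Z - proj1_sig q Z) / 2).
        assert (hd : 0 < d) by (unfold d; assert (0 < Rabs (proj1_sig p Z - proj1_sig q Z)) by (apply Rabs_pos_lt; lra); lra).
        exists (fun r : X => nb [Z] d (proj1_sig p) (proj1_sig r)), (fun r : X => nb [Z] d (proj1_sig q) (proj1_sig r)).
        split; [apply open_nb; intros ? [<-|[]]; auto|]. split; [apply open_nb; intros ? [<-|[]]; auto|].
        split; [apply nb_refl; auto|]. split; [apply nb_refl; auto|].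
        intros r h1 h2. specialize (h1 Z (or_introl eq_refl)). specialize (h2 Z (or_introl eq_refl)).
        unfold d in *. apply Rabs_def2 in h1. apply Rabs_def2 in h2.
        destruct (Rle_dec 0 (proj1_sig p Z - proj1_sig q Z)).
        * rewrite Rabs_pos_eq in h1, h2 by auto. lra.
        * rewrite Rabs_left in h1, h2 by lra. lra.
      +
        intros g Gg U hU p hp. simpl in hU. destruct (hU _ hp) as [Xs [d [hd [hXs h]]]].
        exists (map (Tr g) Xs), d. split; auto. split.
        * intros Z hZ. apply in_map_iff in hZ. destruct hZ as [W [<- hW]]. apply B_tr; auto.
        * intros q hq. apply h. rewrite !act'_val by auto. intros Z hZ. rewrite !act_B by auto.
          apply hq, in_map; auto.
      + intro x. apply sig_eq_val. rewrite act'_val by apply Gone. apply act_one. apply (proj2_sig x).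
      + intros g h x Gg Gh. apply sig_eq_val. rewrite !act'_val by (auto; apply Gmul; auto).
        symmetry; apply act_comp; auto.
    -
      intros x C1 C2 h1 h2 h12.
      assert (l1 := lift C1 h1). assert (l2 := lift C2 h2).
      destruct (Hflow (proj1_sig x) (KKM _ (YK _ (proj1 (proj2_sig x)))) _ _ l1 l2) as [D [hD hDD]].
      { intros nu _ [Yn c1] [_ c2]. apply (h12 (exist _ (normz nu) (Ynorm nu Yn))); auto. }
      exists D. split; auto. intros g Gg. destruct (hDD g Gg) as [a b].
      assert (Ym : Y (mtrans G mul g (proj1_sig x))).
      { apply (Cl_eqB Y (act g (proj1_sig x))); [auto| apply normz_eqB| apply (proj1 (hact g x Gg))]. }
      assert (E : forall h, exist (fun mu => Y mu /\ nz mu) (normz (mtrans G mul g (proj1_sig x))) h = act' g x).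
      { intro h. apply sig_eq_val. simpl. rewrite act'_val; auto. }
      split.
      + intro c. apply a. split; auto. intro h. rewrite E. auto.
      + intro c. apply b. split; auto. intro h. rewrite E. auto.
    -
      intros Y' hY' [y hy] hinv x.
      set (Y'' := fun f => Y f /\ forall h : Y (normz f) /\ nz (normz f), Y' (exist _ (normz f) h)).
      assert (E : forall (p : X) h, exist (fun mu => Y mu /\ nz mu) (normz (proj1_sig p)) h = p).
      { intros [p [Yp np]] h. apply sig_eq_val. simpl. apply nz_eq; auto; [apply normz_nz| apply normz_eqB]. }
      assert (QY'' : QY Y'').
      { split; [exists (proj1_sig y); split; [apply (proj2_sig y)| intro h; rewrite E; auto]|]. split.
        - apply lift; auto.
        - intros g f Gg [Yf hf]. split; [apply Yinv; auto|]. intro h.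
          set (pf := exist (fun mu => Y mu /\ nz mu) (normz f) (Ynorm f Yf)).
          assert (E2 : exist (fun mu => Y mu /\ nz mu) (normz (act g f)) h = act' g pf).
          { apply sig_eq_val. simpl. rewrite act'_val by auto. simpl.
            apply nz_eq; [apply normz_nz| apply act_nz|]. eapply eqB_trans; [apply normz_eqB|].
            rewrite (act_eqB g f (normz f)); [apply eqB_refl| auto| apply eqB_sym, normz_eqB]. }
          rewrite E2. apply hinv; auto. apply hf. }
      assert (hx := Ymin Y'' QY'' (fun f h => proj1 h) (proj1_sig x) (proj1 (proj2_sig x))).
      destruct hx as [_ hx]. rewrite <- (E x (Ynorm _ (proj1 (proj2_sig x)))). apply hx.
    -
      intros x y.
      assert (Kx : K (proj1_sig x)) by (apply YK, (proj2_sig x)).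
      assert (Ky : K (proj1_sig y)) by (apply YK, (proj2_sig y)).
      set (I := ({Xs : list (list M -> Prop) | forall X, In X Xs -> B X} * nat)%type).
      set (le := fun i j : I => (forall Z, In Z (proj1_sig (fst i)) -> In Z (proj1_sig (fst j))) /\ (snd i <= snd j)%nat).
      set (gs := fun i : I => proj1_sig (constructive_indefinite_description _
                  (prox K QKK KKM Kmin e (conj Ke (conj nze hext)) _ _ Kx Ky (proj1_sig (fst i))
                        (/ (INR (snd i) + 1)) (proj2_sig (fst i)) (pos_inv (snd i))))).
      assert (hgs : forall i, G (gs i) /\ nb (proj1_sig (fst i)) (/ (INR (snd i) + 1)) e (act (gs i) (proj1_sig x)) /\
                   nb (proj1_sig (fst i)) (/ (INR (snd i) + 1)) e (act (gs i) (proj1_sig y))).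
      { intro i. unfold gs. destruct (constructive_indefinite_description _ _) as [g hg]. exact hg. }
      exists I, le, gs, (exist _ e (conj Ye nze)). split; [|split; [|split]].
      + split; [exists (exist (fun Xs => forall X, In X Xs -> B X) nil (fun _ h => False_ind _ h), O); auto|].
        split; [intro i; split; auto|]. split.
        * intros i j l [a1 a2] [b1 b2]. split; auto. lia.
        * intros [[X1 h1] n1] [[X2 h2] n2].
          assert (h12 : forall X, In X (X1 ++ X2) -> B X) by (intros Z hZ; apply in_app_or in hZ; destruct hZ; auto).
          exists (exist _ (X1 ++ X2) h12, Nat.max n1 n2). unfold le. simpl.
          split; (split; [intros Z hZ; apply in_or_app; auto| lia]).
      + intro i; apply hgs.
      + intros U hU Ue. simpl in hU. destruct (hU _ Ue) as [Xs [d [hd [hXs h]]]].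
        destruct (small_inv d hd) as [n hn].
        exists (exist _ Xs hXs, n). intros [[Xi hi] ni] [hsub hle]. simpl in hsub, hle.
        apply h. rewrite act'_val by apply hgs. simpl.
        destruct (hgs (exist _ Xi hi, ni)) as [_ [n1 _]]. simpl in n1.
        intros Z hZ. assert (q := n1 Z (hsub Z hZ)). assert (r := inv_mono n ni hle). lra.
      + intros U hU Ue. simpl in hU. destruct (hU _ Ue) as [Xs [d [hd [hXs h]]]].
        destruct (small_inv d hd) as [n hn].
        exists (exist _ Xs hXs, n). intros [[Xi hi] ni] [hsub hle]. simpl in hsub, hle.
        apply h. rewrite act'_val by apply hgs. simpl.
        destruct (hgs (exist _ Xi hi, ni)) as [_ [_ n1]]. simpl in n1.
        intros Z hZ. assert (q := n1 Z (hsub Z hZ)). assert (r := inv_mono n ni hle). lra. }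
  exists e. split; [apply KKM; auto|].
  intros g Z Gg hZ.
  set (pe := exist (fun mu => Y mu /\ nz mu) e (conj Ye nze)).
  assert (E := f_equal (@proj1_sig _ _) (Xall (act' g pe) pe)). rewrite act'_val in E by auto. simpl in E.
  change (mtrans G mul g e Z) with (e (Tr g Z)). rewrite <- (act_B g e Z hZ), E. reflexivity.
Qed.

End Meas.


Theorem mainTheorem16 (M : structure) (k : nat) (G : list M -> Prop)
  (mul : list M -> list M -> list M) (inv : list M -> list M) (one : list M) :
  @def_group M k G mul inv one ->
  (forall p, @is_type M k G p -> @definable_type M k G p) ->
  @measure_flow_definable M k G mul ->
  @def_strongly_amenable M k G mul one ->
  @def_amenable M k G mul.
Proof.
  intros HG Htyp Hflow Hsa. exact (amenable_main M k G mul inv one HG Htyp Hflow Hsa).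
Qed.
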